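(* Let $Z$ be the pure $3$-dimensional simplicial complex on the $16$ vertices $0,1,\dots,9,a,b,c,d,e,f$ whose $80$ facets are the following four-element sets (each string lists the four vertices of a facet): 048c, 048e, 049c, 049d, 04ad, 04ae, 059d, 059f, 05ad, 05ae, 05be, 05bf, 068c, 068e, 069c, 069e, 079e, 079f, 07be, 07bf, 148c, 148e, 14ae, 14af, 14bc, 14bf, 158c, 158d, 159d, 159f, 15bc, 15bf, 168e, 168f, 16ae, 16af, 178d, 178f, 179d, 179f, 24ad, 24af, 24bd, 24bf, 258c, 258d, 25ac, 25ad, 268c, 268d, 269c, 269e, 26ae, 26af, 26bd, 26bf, 279c, 279e, 27ac, 27ae, 349c, 349d, 34bc, 34bd, 35ac, 35ae, 35bc, 35be, 368d, 368f, 36bd, 36bf, 378d, 378f, 379c, 379d, 37ac, 37ae, 37be, 37bf. Then $Z$ is not polytopal: there is no simplicial convex $4$-polytope whose boundary complex is combinatorially isomorphic to $Z$.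
   Context: $Z$ is Zheng's balanced $2$-neighborly combinatorial $3$-sphere with $f$-vector $(16,96,160,80)$, whose $1$-skeleton is the complete multipartite graph $K_{4,4,4,4}$. A simplicial $(d-1)$-sphere is polytopal if it is isomorphic to the boundary complex of a simplicial convex $d$-polytope; here $d=4$. *)

(* Defs.v *)
From mathcomp Require Import all_boot all_order all_algebra.
From mathcomp Require Import reals.
Set Implicit Arguments. Unset Strict Implicit. Unset Printing Implicit Defensive.
Import Order.TTheory GRing.Theory Num.Theory.
Local Open Scope ring_scope.

Definition dotp (R : realType) (d : nat) (x y : 'rV[R]_d) : R :=
  \sum_(k < d) x 0 k * y 0 k.

(* I.e. T is the vertex set of a nonempty
   proper face of conv{p i} (when all p i are vertices). *)
Definition supp_face (R : realType) (n d : nat) (p : 'I_n -> 'rV[R]_d)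
    (T : {set 'I_n}) : Prop :=
  exists a : 'rV[R]_d, exists b : R,
    [/\ a != 0,
        (forall i, i \in T -> dotp (p i) a = b) &
        (forall i, i \notin T -> dotp (p i) a < b)].

(* Homogenized coordinates of the points indexed by T (rows (p i, 1) for
   i in T, zero rows otherwise); its rank is 1 + the affine dimension of
   the point set {p i | i in T}. *)
Definition hom_mx (R : realType) (n d : nat) (p : 'I_n -> 'rV[R]_d)
    (T : {set 'I_n}) : 'M[R]_(n, d + 1) :=
  \matrix_(i < n, j < d + 1)
     (if i \in T then (row_mx (p i) (const_mx 1 : 'rV[R]_1)) 0 j else 0).

Definition is_facet (R : realType) (n d : nat) (p : 'I_n -> 'rV[R]_d)
    (T : {set 'I_n}) : Prop :=
  and (supp_face p T) (\rank (hom_mx p T) = d).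

(* p realizes the pure complex with facet family K as the boundary complex
   of the convex polytope conv{p i | i < n} in R^d: every p i is a vertex
   (so the vertices of the polytope are exactly the p i, pairwise distinct),
   and the vertex sets of the facets of the polytope are exactly the
   members of K.  (Faces of a polytope are determined by its facets.) *)
Definition boundary_realization (R : realType) (n d : nat)
    (K : {set 'I_n} -> Prop) (p : 'I_n -> 'rV[R]_d) : Prop :=
  (forall i, supp_face p [set i]) /\
  (forall T : {set 'I_n}, is_facet p T <-> K T).

(* K is polytopal in dimension d: it is isomorphic to the boundary complex of
   a convex d-polytope.  The vertex labelling p absorbs the isomorphism. *)
Definition polytopal (R : realType) (n d : nat) (K : {set 'I_n} -> Prop) : Prop :=
  exists p : 'I_n -> 'rV[R]_d, boundary_realization K p.

Definition Z_facets : seq (seq nat) := (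
  [:: [:: 0; 4; 8; 12];
  [:: 0; 4; 8; 14];
  [:: 0; 4; 9; 12];
  [:: 0; 4; 9; 13];
  [:: 0; 4; 10; 13];
  [:: 0; 4; 10; 14];
  [:: 0; 5; 9; 13];
  [:: 0; 5; 9; 15];
  [:: 0; 5; 10; 13];
  [:: 0; 5; 10; 14];
  [:: 0; 5; 11; 14];
  [:: 0; 5; 11; 15];
  [:: 0; 6; 8; 12];
  [:: 0; 6; 8; 14];
  [:: 0; 6; 9; 12];
  [:: 0; 6; 9; 14];
  [:: 0; 7; 9; 14];
  [:: 0; 7; 9; 15];
  [:: 0; 7; 11; 14];
  [:: 0; 7; 11; 15];
  [:: 1; 4; 8; 12];
  [:: 1; 4; 8; 14];
  [:: 1; 4; 10; 14];
  [:: 1; 4; 10; 15];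
  [:: 1; 4; 11; 12];
  [:: 1; 4; 11; 15];
  [:: 1; 5; 8; 12];
  [:: 1; 5; 8; 13];
  [:: 1; 5; 9; 13];
  [:: 1; 5; 9; 15];
  [:: 1; 5; 11; 12];
  [:: 1; 5; 11; 15];
  [:: 1; 6; 8; 14];
  [:: 1; 6; 8; 15];
  [:: 1; 6; 10; 14];
  [:: 1; 6; 10; 15];
  [:: 1; 7; 8; 13];
  [:: 1; 7; 8; 15];
  [:: 1; 7; 9; 13];
  [:: 1; 7; 9; 15];
  [:: 2; 4; 10; 13];
  [:: 2; 4; 10; 15];
  [:: 2; 4; 11; 13];
  [:: 2; 4; 11; 15];
  [:: 2; 5; 8; 12];
  [:: 2; 5; 8; 13];
  [:: 2; 5; 10; 12];
  [:: 2; 5; 10; 13];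
  [:: 2; 6; 8; 12];
  [:: 2; 6; 8; 13];
  [:: 2; 6; 9; 12];
  [:: 2; 6; 9; 14];
  [:: 2; 6; 10; 14];
  [:: 2; 6; 10; 15];
  [:: 2; 6; 11; 13];
  [:: 2; 6; 11; 15];
  [:: 2; 7; 9; 12];
  [:: 2; 7; 9; 14];
  [:: 2; 7; 10; 12];
  [:: 2; 7; 10; 14];
  [:: 3; 4; 9; 12];
  [:: 3; 4; 9; 13];
  [:: 3; 4; 11; 12];
  [:: 3; 4; 11; 13];
  [:: 3; 5; 10; 12];
  [:: 3; 5; 10; 14];
  [:: 3; 5; 11; 12];
  [:: 3; 5; 11; 14];
  [:: 3; 6; 8; 13];
  [:: 3; 6; 8; 15];
  [:: 3; 6; 11; 13];
  [:: 3; 6; 11; 15];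
  [:: 3; 7; 8; 13];
  [:: 3; 7; 8; 15];
  [:: 3; 7; 9; 12];
  [:: 3; 7; 9; 13];
  [:: 3; 7; 10; 12];
  [:: 3; 7; 10; 14];
  [:: 3; 7; 11; 14];
  [:: 3; 7; 11; 15]])%N.

Definition Z_facet (T : {set 'I_16}) : Prop :=
  exists2 s, s \in Z_facets & T = [set x : 'I_16 | nat_of_ord x \in s].

(* Main.v *)
Require Import Defs.
From mathcomp Require Import all_boot all_order all_algebra.
From mathcomp Require Import reals perm ring lra.
Set Implicit Arguments. Unset Strict Implicit. Unset Printing Implicit Defensive.
Import Order.TTheory GRing.Theory Num.Theory.
Local Open Scope ring_scope.

Section G.
Variable R : realType.
Definition rmx (n : nat) (s : seq 'rV[R]_5) : 'M[R]_(n,5) := \matrix_(i < n) nth 0 s i.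
Definition Bv (x0 x1 x2 x3 x4 : 'rV[R]_5) := \det (rmx 5 [:: x0; x1; x2; x3; x4]).

Lemma det_swap (A : 'M[R]_5) (i j : 'I_5) : i != j -> \det (xrow i j A) = - \det A.
Proof.
move=> ij; rewrite xrowE det_mulmx /tperm_mx det_perm odd_tperm ij /=.
by rewrite expr1 mulN1r.
Qed.

Lemma Bsw1 x0 x1 x2 x3 x4 : Bv x0 x1 x2 x3 x4 = - Bv x1 x0 x2 x3 x4.
Proof.
rewrite /Bv -(det_swap (rmx 5 [:: x1; x0; x2; x3; x4]) (i:=0) (j:=1)) //.
congr (\det _); apply/matrixP => i k; rewrite !mxE.
by case: i => [[|[|[|[|[|?]]]]] Hi] //=; rewrite permE /=.
Qed.
End G.
Section C.
Variable R : realType.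
Lemma cramer6 (y : 'I_6 -> 'rV[R]_5) (j : 'I_5) :
  \sum_(k < 6) (-1)^+k * \det (\matrix_(i < 5) y (lift k i)) * y k 0 j = 0.
Proof.
pose N := \matrix_(r < 6, c < 6) (match unlift ord_max c with Some c' => y r 0 c' | None => y r 0 j end).
have N0 : \det N = 0.
  rewrite -det_tr (@determinant_alternate _ _ _ (lift ord_max j) ord_max).
  - by [].
  - by rewrite eq_sym neq_lift.
  by move=> r; rewrite !mxE liftK unlift_none.
transitivity (- \det N); last by rewrite N0 oppr0.
rewrite (expand_det_col _ ord_max) -sumrN; apply: eq_bigr => i _.
have e5 : (-1) ^+ (nat_of_ord (@ord_max 5)) = -1 :> R by rewrite /= -signr_odd /= expr1.
rewrite /cofactor !mxE unlift_none exprD e5.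
have -> : row' i (col' ord_max N) = \matrix_(i0 < 5) y (lift i i0).
  by apply/matrixP => a b; rewrite !mxE liftK.
ring.
Qed.
End C.
Section D.
Variable R : realType.
Definition Lf (c : 'cV[R]_5) (x : 'rV[R]_5) := (x *m c) 0 0.
Lemma cramerL (x0 x1 x2 x3 x4 x5 : 'rV[R]_5) (c : 'cV[R]_5) :
  Bv x1 x2 x3 x4 x5 * Lf c x0 - Bv x0 x2 x3 x4 x5 * Lf c x1 + Bv x0 x1 x3 x4 x5 * Lf c x2
  - Bv x0 x1 x2 x4 x5 * Lf c x3 + Bv x0 x1 x2 x3 x5 * Lf c x4 - Bv x0 x1 x2 x3 x4 * Lf c x5 = 0.
Proof.
pose y (k : 'I_6) := nth 0 [:: x0; x1; x2; x3; x4; x5] k.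
have H : \sum_(j < 5) (\sum_(k < 6) (-1)^+k * \det (\matrix_(i < 5) y (lift k i)) * y k 0 j) * c j 0 = 0.
  by apply: big1 => j _; rewrite cramer6 mul0r.
have H2 : \sum_(k < 6) (-1)^+k * \det (\matrix_(i < 5) y (lift k i)) * Lf c (y k) = 0.
  transitivity (\sum_(j < 5) \sum_(k < 6) (-1)^+k * \det (\matrix_(i < 5) y (lift k i)) * y k 0 j * c j 0).
    rewrite exchange_big; apply: eq_bigr => k _; rewrite /Lf mxE big_distrr.
    by apply: eq_bigr => j _; rewrite /= mulrA.
  by apply: (etrans _ H); apply: eq_bigr => j _; rewrite big_distrl.
move: H2; rewrite !big_ord_recl big_ord0 /=.
have E : forall (k : 'I_6) (l : seq 'rV[R]_5), (forall i : 'I_5, y (lift k i) = nth 0 l i) ->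
   \det (\matrix_(i < 5) y (lift k i)) = \det (rmx 5 l).
  by move=> k l Hl; congr (\det _); apply/matrixP => i j; rewrite !mxE Hl.
rewrite (E _ [:: x1; x2; x3; x4; x5]); last by case=> [[|[|[|[|[|?]]]]] Hi].
rewrite (E _ [:: x0; x2; x3; x4; x5]); last by case=> [[|[|[|[|[|?]]]]] Hi].
rewrite (E _ [:: x0; x1; x3; x4; x5]); last by case=> [[|[|[|[|[|?]]]]] Hi].
rewrite (E _ [:: x0; x1; x2; x4; x5]); last by case=> [[|[|[|[|[|?]]]]] Hi].
rewrite (E _ [:: x0; x1; x2; x3; x5]); last by case=> [[|[|[|[|[|?]]]]] Hi].
rewrite (E _ [:: x0; x1; x2; x3; x4]); last by case=> [[|[|[|[|[|?]]]]] Hi].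
rewrite /y /= => H2; rewrite /Bv; lra.
Qed.
End D.
Section E.
Variable R : realType.
Lemma Bv_lin (x0 x1 x2 x3 : 'rV[R]_5) : exists c : 'cV[R]_5, forall x, Bv x0 x1 x2 x3 x = Lf c x.
Proof.
pose M := rmx 5 [:: x0; x1; x2; x3; 0].
exists (\col_j cofactor M (@Ordinal 5 4 isT) j) => x.
rewrite /Bv /Lf (expand_det_row _ (@Ordinal 5 4 isT)) mxE; apply: eq_bigr => j _.
rewrite !mxE /=; congr (_ * _).
rewrite /cofactor; congr (_ * \det _); apply/matrixP => a b; rewrite !mxE.
by case: a => [[|[|[|[|?]]]] Ha].
Qed.

Lemma Bv_rep0 x0 x1 x2 x3 : Bv x0 x1 x2 x3 x0 = 0 :> R.
Proof. by apply: (@determinant_alternate _ _ _ 0 (@Ordinal 5 4 isT)); [by [] | move=> j; rewrite !mxE]. Qed.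
Lemma Bv_rep1 x0 x1 x2 x3 : Bv x0 x1 x2 x3 x1 = 0 :> R.
Proof. by apply: (@determinant_alternate _ _ _ (@Ordinal 5 1 isT) (@Ordinal 5 4 isT)); [by [] | move=> j; rewrite !mxE]. Qed.
Lemma Bv_rep2 x0 x1 x2 x3 : Bv x0 x1 x2 x3 x2 = 0 :> R.
Proof. by apply: (@determinant_alternate _ _ _ (@Ordinal 5 2 isT) (@Ordinal 5 4 isT)); [by [] | move=> j; rewrite !mxE]. Qed.

Lemma GPv (u1 u2 u3 a b c d : 'rV[R]_5) :
  Bv u1 u2 u3 a b * Bv u1 u2 u3 c d - Bv u1 u2 u3 a c * Bv u1 u2 u3 b d
  + Bv u1 u2 u3 a d * Bv u1 u2 u3 b c = 0.
Proof.
have [cc Hc] := Bv_lin u1 u2 u3 a.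
have := cramerL u1 u2 u3 b c d cc.
rewrite -!Hc Bv_rep0 Bv_rep1 Bv_rep2 => H; lra.
Qed.
End E.
Section Sw.
Variable R : realType.
Lemma Bsw2 (x0 x1 x2 x3 x4 : 'rV[R]_5) : Bv x0 x1 x2 x3 x4 = - Bv x0 x2 x1 x3 x4.
Proof.
rewrite /Bv -(det_swap (rmx 5 [:: x0; x2; x1; x3; x4]) (i:=1) (j:=2)) //.
congr (\det _); apply/matrixP => i k; rewrite !mxE.
by case: i => [[|[|[|[|[|?]]]]] Hi] //=; rewrite permE /=.
Qed.
Lemma Bsw3 (x0 x1 x2 x3 x4 : 'rV[R]_5) : Bv x0 x1 x2 x3 x4 = - Bv x0 x1 x3 x2 x4.
Proof.
rewrite /Bv -(det_swap (rmx 5 [:: x0; x1; x3; x2; x4]) (i:=2) (j:=3)) //.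
congr (\det _); apply/matrixP => i k; rewrite !mxE.
by case: i => [[|[|[|[|[|?]]]]] Hi] //=; rewrite permE /=.
Qed.
Lemma Bsw4 (x0 x1 x2 x3 x4 : 'rV[R]_5) : Bv x0 x1 x2 x3 x4 = - Bv x0 x1 x2 x4 x3.
Proof.
rewrite /Bv -(det_swap (rmx 5 [:: x0; x1; x2; x4; x3]) (i:=3) (j:=4)) //.
congr (\det _); apply/matrixP => i k; rewrite !mxE.
by case: i => [[|[|[|[|[|?]]]]] Hi] //=; rewrite permE /=.
Qed.
End Sw.
Section Geo.
Variable R : realType.
Variable p : 'I_16 -> 'rV[R]_4.
Definition q (i : nat) : 'rV[R]_5 := row_mx (p (inord i)) (const_mx 1 : 'rV[R]_1).
Definition Bp i0 i1 i2 i3 i4 := Bv (q i0) (q i1) (q i2) (q i3) (q i4).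

Definition alc (a : 'rV[R]_4) (b : R) : 'cV[R]_5 := col_mx a^T (const_mx (- b) : 'cV[R]_1).

Lemma Lq a b i : Lf (alc a b) (q i) = dotp (p (inord i)) a - b.
Proof.
rewrite /Lf /q /alc. rewrite (mul_row_col (p (inord i)) (const_mx 1 : 'rV[R]_1) a^T (const_mx (- b) : 'cV[R]_1)). rewrite !mxE big_ord1 !mxE mul1r /dotp; congr (_ + _).
by apply: eq_bigr => k _; rewrite !mxE.
Qed.

Lemma rmx_sub n (s : seq 'rV[R]_5) (k : 'I_n) : (nth 0 s k <= rmx n s)%MS.
Proof. by rewrite -(rowK (fun i : 'I_n => nth 0 s i) k); exact: row_sub. Qed.

Lemma facet_nz (T : {set 'I_16}) f0 f1 f2 f3 x :
  is_facet p T ->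
  (forall i : 'I_16, i \in T -> val i \in [:: f0; f1; f2; f3]) ->
  inord x \notin T ->
  (forall f, f \in [:: f0; f1; f2; f3] -> inord f \in T) ->
  Bp f0 f1 f2 f3 x != 0.
Proof.
move=> [[a [b [a0 hT hN]]] rk] Tsub xT fT.
pose M4 := rmx 4 [:: q f0; q f1; q f2; q f3].
pose M5 := rmx 5 [:: q f0; q f1; q f2; q f3; q x].
have Lf0 : forall f, f \in [:: f0; f1; f2; f3] -> Lf (alc a b) (q f) = 0.
  by move=> f /fT fT'; rewrite Lq hT // subrr.
have hom4 : (hom_mx p T <= M4)%MS.
  apply/row_subP => i.
  case: (boolP (i \in T)) => iT.
    have -> : row i (hom_mx p T) = q (val i).
      by apply/rowP => j; rewrite !mxE iT /q inord_val.
    move: (Tsub i iT); rewrite !inE => /or4P [] /eqP ->.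
    - exact: (@rmx_sub 4 [:: q f0; q f1; q f2; q f3] (@Ordinal 4 0 isT)).
    - exact: (@rmx_sub 4 [:: q f0; q f1; q f2; q f3] (@Ordinal 4 1 isT)).
    - exact: (@rmx_sub 4 [:: q f0; q f1; q f2; q f3] (@Ordinal 4 2 isT)).
    - exact: (@rmx_sub 4 [:: q f0; q f1; q f2; q f3] (@Ordinal 4 3 isT)).
  have -> : row i (hom_mx p T) = 0 by apply/rowP => j; rewrite !mxE (negbTE iT).
  exact: sub0mx.
have rk4 : \rank M4 = 4%N.
  apply/eqP; rewrite eqn_leq rank_leq_row /= -{1}rk; exact: mxrankS.
have M4c : M4 *m alc a b = 0.
  apply/colP => k; rewrite [RHS]mxE.
  transitivity (Lf (alc a b) (nth 0 [:: q f0; q f1; q f2; q f3] k)).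
    by rewrite /Lf !mxE; apply: eq_bigr => j _; rewrite !mxE.
  by case: k => [[|[|[|[|?]]]] Hk] //=; rewrite Lf0 // !inE eqxx ?orbT.
have qx : ~~ (q x <= M4)%MS.
  apply/negP => /submxP [u hu].
  have : Lf (alc a b) (q x) = 0 by rewrite /Lf hu -mulmxA M4c mulmx0 mxE.
  rewrite Lq => /eqP; rewrite subr_eq0 => /eqP e.
  by move: (hN _ xT); rewrite e ltxx.
have lt45 : (M4 < M5)%MS.
  rewrite ltmxE; apply/andP; split.
    apply/row_subP => k; rewrite rowK.
    case: k => [[|[|[|[|?]]]] Hk] //=.
    - exact: (@rmx_sub 5 [:: q f0; q f1; q f2; q f3; q x] (@Ordinal 5 0 isT)).
    - exact: (@rmx_sub 5 [:: q f0; q f1; q f2; q f3; q x] (@Ordinal 5 1 isT)).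
    - exact: (@rmx_sub 5 [:: q f0; q f1; q f2; q f3; q x] (@Ordinal 5 2 isT)).
    - exact: (@rmx_sub 5 [:: q f0; q f1; q f2; q f3; q x] (@Ordinal 5 3 isT)).
  apply/negP => h; apply/negP: qx; apply/negPn.
  exact: submx_trans (@rmx_sub 5 [:: q f0; q f1; q f2; q f3; q x] (@Ordinal 5 4 isT)) h.
have rk5 : \rank M5 = 5%N.
  apply/eqP; rewrite eqn_leq rank_leq_row /=.
  by move: lt45; rewrite ltmxErank rk4 => /andP [].
have : M5 \in unitmx by rewrite -row_free_unit /row_free rk5.
by rewrite unitmxE unitfE.
Qed.

Lemma facet_pos (T : {set 'I_16}) f0 f1 f2 f3 v w :
  is_facet p T ->
  (forall i : 'I_16, i \in T -> val i \in [:: f0; f1; f2; f3]) ->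
  inord v \notin T -> inord w \notin T ->
  (forall f, f \in [:: f0; f1; f2; f3] -> inord f \in T) ->
  0 < Bp f0 f1 f2 f3 v * Bp f0 f1 f2 f3 w.
Proof.
move=> hf Tsub vT wT fT.
have nzv := facet_nz hf Tsub vT fT.
have nzw := facet_nz hf Tsub wT fT.
move: hf => [[a [b [a0 hT hN]]] rk].
have Lf0 : forall f, f \in [:: f0; f1; f2; f3] -> Lf (alc a b) (q f) = 0.
  by move=> f /fT fT'; rewrite Lq hT // subrr.
have := cramerL (q f0) (q f1) (q f2) (q f3) (q v) (q w) (alc a b).
have m0 : f0 \in [:: f0; f1; f2; f3] by rewrite !inE eqxx.
have m1 : f1 \in [:: f0; f1; f2; f3] by rewrite !inE eqxx ?orbT.
have m2 : f2 \in [:: f0; f1; f2; f3] by rewrite !inE eqxx ?orbT.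
have m3 : f3 \in [:: f0; f1; f2; f3] by rewrite !inE eqxx ?orbT.
rewrite (Lf0 _ m0) (Lf0 _ m1) (Lf0 _ m2) (Lf0 _ m3) !Lq.
have hv := hN _ vT; have hw := hN _ wT.
rewrite -/(Bp f0 f1 f2 f3 v) -/(Bp f0 f1 f2 f3 w).
move: (Bp f0 f1 f2 f3 v) (Bp f0 f1 f2 f3 w) nzv nzw hv hw => X Y nX nY hv hw e.
have X2 : 0 < X * X by rewrite -expr2 exprn_even_gt0.
set lv := dotp _ a - b in e. set lw := dotp (p (inord w)) a - b in e.
have lv0 : lv < 0 by rewrite /lv subr_lt0.
have lw0 : lw < 0 by rewrite /lw subr_lt0.
have e2 : X * Y * lv = X * X * lw.
  have : X * (Y * lv - X * lw) = 0 by rewrite -[RHS](mulr0 X) -e; ring.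
  move=> h; apply/eqP; rewrite -subr_eq0; apply/eqP; rewrite -h; ring.
nra.
Qed.
End Geo.
Definition fcond (f0 f1 f2 f3 v w : nat) : bool :=
  [&& [:: f0; f1; f2; f3] \in Z_facets, v \notin [:: f0; f1; f2; f3],
      w \notin [:: f0; f1; f2; f3], (v < 16)%N & (w < 16)%N].
Section Comb.
Variable R : realType.
Variable E : nat -> nat -> nat -> nat -> nat -> R.
Hypothesis hGP : forall a1 a2 a3 a b c d,
  E a1 a2 a3 a b * E a1 a2 a3 c d - E a1 a2 a3 a c * E a1 a2 a3 b d
  + E a1 a2 a3 a d * E a1 a2 a3 b c = 0.
Hypothesis hsw1 : forall a b c d e, E a b c d e = - E b a c d e.
Hypothesis hsw2 : forall a b c d e, E a b c d e = - E a c b d e.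
Hypothesis hsw3 : forall a b c d e, E a b c d e = - E a b d c e.
Hypothesis hsw4 : forall a b c d e, E a b c d e = - E a b c e d.
Hypothesis hF : forall f0 f1 f2 f3 v w, fcond f0 f1 f2 f3 v w ->
  0 < E f0 f1 f2 f3 v * E f0 f1 f2 f3 w.
Hypothesis href : E 2 6 7 10 14 < 0.
Definition s_2_6_7_10_14 := href.
Lemma s_1_2_6_10_14 : E 1 2 6 10 14 < 0.
Proof.
have h0 := s_2_6_7_10_14.
have := @hF 2 6 10 14 7 1 isT.
rewrite ?(@hsw4 2 6 10 14 7) ?(@hsw3 2 6 10 7 14) ?(@hsw4 2 6 10 14 1) ?(@hsw3 2 6 10 1 14) ?(@hsw2 2 6 1 10 14) ?(@hsw1 2 1 6 10 14).
move=> hp; nra.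
Qed.

Lemma s_1_4_6_10_14 : E 1 4 6 10 14 < 0.
Proof.
have h0 := s_1_2_6_10_14.
have := @hF 1 6 10 14 2 4 isT.
rewrite ?(@hsw4 1 6 10 14 2) ?(@hsw3 1 6 10 2 14) ?(@hsw2 1 6 2 10 14) ?(@hsw4 1 6 10 14 4) ?(@hsw3 1 6 10 4 14) ?(@hsw2 1 6 4 10 14).
move=> hp; nra.
Qed.

Lemma s_0_1_4_10_14 : E 0 1 4 10 14 < 0.
Proof.
have h0 := s_1_4_6_10_14.
have := @hF 1 4 10 14 6 0 isT.
rewrite ?(@hsw4 1 4 10 14 6) ?(@hsw3 1 4 10 6 14) ?(@hsw4 1 4 10 14 0) ?(@hsw3 1 4 10 0 14) ?(@hsw2 1 4 0 10 14) ?(@hsw1 1 0 4 10 14).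
move=> hp; nra.
Qed.

Lemma s_1_4_10_14_15 : E 1 4 10 14 15 < 0.
Proof.
have h0 := s_1_4_6_10_14.
have := @hF 1 4 10 14 6 15 isT.
rewrite ?(@hsw4 1 4 10 14 6) ?(@hsw3 1 4 10 6 14).
move=> hp; nra.
Qed.

Lemma s_0_1_4_10_15 : 0 < E 0 1 4 10 15.
Proof.
have h0 := s_1_4_10_14_15.
have := @hF 1 4 10 15 14 0 isT.
rewrite ?(@hsw4 1 4 10 15 14) ?(@hsw4 1 4 10 15 0) ?(@hsw3 1 4 10 0 15) ?(@hsw2 1 4 0 10 15) ?(@hsw1 1 0 4 10 15).
move=> hp; nra.
Qed.

Lemma s_1_6_8_10_14 : 0 < E 1 6 8 10 14.
Proof.
have h0 := s_1_2_6_10_14.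
have := @hF 1 6 10 14 2 8 isT.
rewrite ?(@hsw4 1 6 10 14 2) ?(@hsw3 1 6 10 2 14) ?(@hsw2 1 6 2 10 14) ?(@hsw4 1 6 10 14 8) ?(@hsw3 1 6 10 8 14).
move=> hp; nra.
Qed.

Lemma s_0_1_6_8_14 : E 0 1 6 8 14 < 0.
Proof.
have h0 := s_1_6_8_10_14.
have := @hF 1 6 8 14 10 0 isT.
rewrite ?(@hsw4 1 6 8 14 10) ?(@hsw4 1 6 8 14 0) ?(@hsw3 1 6 8 0 14) ?(@hsw2 1 6 0 8 14) ?(@hsw1 1 0 6 8 14).
move=> hp; nra.
Qed.

Lemma s_0_6_8_12_14 : E 0 6 8 12 14 < 0.
Proof.
have h0 := s_0_1_6_8_14.
have := @hF 0 6 8 14 1 12 isT.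
rewrite ?(@hsw4 0 6 8 14 1) ?(@hsw3 0 6 8 1 14) ?(@hsw2 0 6 1 8 14) ?(@hsw4 0 6 8 14 12).
move=> hp; nra.
Qed.

Lemma s_0_1_6_8_12 : 0 < E 0 1 6 8 12.
Proof.
have h0 := s_0_6_8_12_14.
have := @hF 0 6 8 12 14 1 isT.
rewrite ?(@hsw4 0 6 8 12 1) ?(@hsw3 0 6 8 1 12) ?(@hsw2 0 6 1 8 12).
move=> hp; nra.
Qed.

Lemma s_1_6_8_14_15 : E 1 6 8 14 15 < 0.
Proof.
have h0 := s_1_6_8_10_14.
have := @hF 1 6 8 14 10 15 isT.
rewrite ?(@hsw4 1 6 8 14 10).
move=> hp; nra.
Qed.

Lemma s_0_1_6_8_15 : 0 < E 0 1 6 8 15.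
Proof.
have h0 := s_1_6_8_14_15.
have := @hF 1 6 8 15 14 0 isT.
rewrite ?(@hsw4 1 6 8 15 14) ?(@hsw4 1 6 8 15 0) ?(@hsw3 1 6 8 0 15) ?(@hsw2 1 6 0 8 15) ?(@hsw1 1 0 6 8 15).
move=> hp; nra.
Qed.

Lemma s_0_1_6_10_14 : 0 < E 0 1 6 10 14.
Proof.
have h0 := s_1_2_6_10_14.
have := @hF 1 6 10 14 2 0 isT.
rewrite ?(@hsw4 1 6 10 14 2) ?(@hsw3 1 6 10 2 14) ?(@hsw2 1 6 2 10 14) ?(@hsw4 1 6 10 14 0) ?(@hsw3 1 6 10 0 14) ?(@hsw2 1 6 0 10 14) ?(@hsw1 1 0 6 10 14).
move=> hp; nra.
Qed.

Lemma s_1_6_10_14_15 : 0 < E 1 6 10 14 15.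
Proof.
have h0 := s_1_2_6_10_14.
have := @hF 1 6 10 14 2 15 isT.
rewrite ?(@hsw4 1 6 10 14 2) ?(@hsw3 1 6 10 2 14) ?(@hsw2 1 6 2 10 14).
move=> hp; nra.
Qed.

Lemma s_0_1_6_10_15 : E 0 1 6 10 15 < 0.
Proof.
have h0 := s_1_6_10_14_15.
have := @hF 1 6 10 15 14 0 isT.
rewrite ?(@hsw4 1 6 10 15 14) ?(@hsw4 1 6 10 15 0) ?(@hsw3 1 6 10 0 15) ?(@hsw2 1 6 0 10 15) ?(@hsw1 1 0 6 10 15).
move=> hp; nra.
Qed.

Lemma s_2_3_7_10_14 : E 2 3 7 10 14 < 0.
Proof.
have h0 := s_2_6_7_10_14.
have := @hF 2 7 10 14 6 3 isT.
rewrite ?(@hsw4 2 7 10 14 6) ?(@hsw3 2 7 10 6 14) ?(@hsw2 2 7 6 10 14) ?(@hsw4 2 7 10 14 3) ?(@hsw3 2 7 10 3 14) ?(@hsw2 2 7 3 10 14).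
move=> hp; nra.
Qed.

Lemma s_3_7_10_12_14 : 0 < E 3 7 10 12 14.
Proof.
have h0 := s_2_3_7_10_14.
have := @hF 3 7 10 14 2 12 isT.
rewrite ?(@hsw4 3 7 10 14 2) ?(@hsw3 3 7 10 2 14) ?(@hsw2 3 7 2 10 14) ?(@hsw1 3 2 7 10 14) ?(@hsw4 3 7 10 14 12).
move=> hp; nra.
Qed.

Lemma s_3_7_9_10_12 : 0 < E 3 7 9 10 12.
Proof.
have h0 := s_3_7_10_12_14.
have := @hF 3 7 10 12 14 9 isT.
rewrite ?(@hsw4 3 7 10 12 9) ?(@hsw3 3 7 10 9 12).
move=> hp; nra.
Qed.

Lemma s_3_7_9_12_13 : E 3 7 9 12 13 < 0.
Proof.
have h0 := s_3_7_9_10_12.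
have := @hF 3 7 9 12 10 13 isT.
rewrite ?(@hsw4 3 7 9 12 10).
move=> hp; nra.
Qed.

Lemma s_1_3_7_9_13 : 0 < E 1 3 7 9 13.
Proof.
have h0 := s_3_7_9_12_13.
have := @hF 3 7 9 13 12 1 isT.
rewrite ?(@hsw4 3 7 9 13 12) ?(@hsw4 3 7 9 13 1) ?(@hsw3 3 7 9 1 13) ?(@hsw2 3 7 1 9 13) ?(@hsw1 3 1 7 9 13).
move=> hp; nra.
Qed.

Lemma s_0_1_7_9_13 : E 0 1 7 9 13 < 0.
Proof.
have h0 := s_1_3_7_9_13.
have := @hF 1 7 9 13 3 0 isT.
rewrite ?(@hsw4 1 7 9 13 3) ?(@hsw3 1 7 9 3 13) ?(@hsw2 1 7 3 9 13) ?(@hsw4 1 7 9 13 0) ?(@hsw3 1 7 9 0 13) ?(@hsw2 1 7 0 9 13) ?(@hsw1 1 0 7 9 13).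
move=> hp; nra.
Qed.

Lemma s_2_7_9_10_14 : 0 < E 2 7 9 10 14.
Proof.
have h0 := s_2_6_7_10_14.
have := @hF 2 7 10 14 6 9 isT.
rewrite ?(@hsw4 2 7 10 14 6) ?(@hsw3 2 7 10 6 14) ?(@hsw2 2 7 6 10 14) ?(@hsw4 2 7 10 14 9) ?(@hsw3 2 7 10 9 14).
move=> hp; nra.
Qed.

Lemma s_0_2_7_9_14 : E 0 2 7 9 14 < 0.
Proof.
have h0 := s_2_7_9_10_14.
have := @hF 2 7 9 14 10 0 isT.
rewrite ?(@hsw4 2 7 9 14 10) ?(@hsw4 2 7 9 14 0) ?(@hsw3 2 7 9 0 14) ?(@hsw2 2 7 0 9 14) ?(@hsw1 2 0 7 9 14).
move=> hp; nra.
Qed.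

Lemma s_0_1_7_9_14 : E 0 1 7 9 14 < 0.
Proof.
have h0 := s_0_2_7_9_14.
have := @hF 0 7 9 14 2 1 isT.
rewrite ?(@hsw4 0 7 9 14 2) ?(@hsw3 0 7 9 2 14) ?(@hsw2 0 7 2 9 14) ?(@hsw4 0 7 9 14 1) ?(@hsw3 0 7 9 1 14) ?(@hsw2 0 7 1 9 14).
move=> hp; nra.
Qed.

Lemma s_0_4_10_13_14 : E 0 4 10 13 14 < 0.
Proof.
have h0 := s_0_1_4_10_14.
have := @hF 0 4 10 14 1 13 isT.
rewrite ?(@hsw4 0 4 10 14 1) ?(@hsw3 0 4 10 1 14) ?(@hsw2 0 4 1 10 14) ?(@hsw4 0 4 10 14 13).
move=> hp; nra.
Qed.

Lemma s_0_4_9_10_13 : E 0 4 9 10 13 < 0.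
Proof.
have h0 := s_0_4_10_13_14.
have := @hF 0 4 10 13 14 9 isT.
rewrite ?(@hsw4 0 4 10 13 9) ?(@hsw3 0 4 10 9 13).
move=> hp; nra.
Qed.

Lemma s_0_2_4_9_13 : E 0 2 4 9 13 < 0.
Proof.
have h0 := s_0_4_9_10_13.
have := @hF 0 4 9 13 10 2 isT.
rewrite ?(@hsw4 0 4 9 13 10) ?(@hsw4 0 4 9 13 2) ?(@hsw3 0 4 9 2 13) ?(@hsw2 0 4 2 9 13).
move=> hp; nra.
Qed.

Lemma s_0_2_4_10_14 : E 0 2 4 10 14 < 0.
Proof.
have h0 := s_0_1_4_10_14.
have := @hF 0 4 10 14 1 2 isT.
rewrite ?(@hsw4 0 4 10 14 1) ?(@hsw3 0 4 10 1 14) ?(@hsw2 0 4 1 10 14) ?(@hsw4 0 4 10 14 2) ?(@hsw3 0 4 10 2 14) ?(@hsw2 0 4 2 10 14).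
move=> hp; nra.
Qed.

Lemma s_2_6_10_14_15 : E 2 6 10 14 15 < 0.
Proof.
have h0 := s_2_6_7_10_14.
have := @hF 2 6 10 14 7 15 isT.
rewrite ?(@hsw4 2 6 10 14 7) ?(@hsw3 2 6 10 7 14).
move=> hp; nra.
Qed.

Lemma s_2_4_6_10_15 : E 2 4 6 10 15 < 0.
Proof.
have h0 := s_2_6_10_14_15.
have := @hF 2 6 10 15 14 4 isT.
rewrite ?(@hsw4 2 6 10 15 14) ?(@hsw4 2 6 10 15 4) ?(@hsw3 2 6 10 4 15) ?(@hsw2 2 6 4 10 15).
move=> hp; nra.
Qed.

Lemma s_0_2_4_10_15 : E 0 2 4 10 15 < 0.
Proof.
have h0 := s_2_4_6_10_15.
have := @hF 2 4 10 15 6 0 isT.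
rewrite ?(@hsw4 2 4 10 15 6) ?(@hsw3 2 4 10 6 15) ?(@hsw4 2 4 10 15 0) ?(@hsw3 2 4 10 0 15) ?(@hsw2 2 4 0 10 15) ?(@hsw1 2 0 4 10 15).
move=> hp; nra.
Qed.

Lemma s_3_5_7_10_14 : 0 < E 3 5 7 10 14.
Proof.
have h0 := s_2_3_7_10_14.
have := @hF 3 7 10 14 2 5 isT.
rewrite ?(@hsw4 3 7 10 14 2) ?(@hsw3 3 7 10 2 14) ?(@hsw2 3 7 2 10 14) ?(@hsw1 3 2 7 10 14) ?(@hsw4 3 7 10 14 5) ?(@hsw3 3 7 10 5 14) ?(@hsw2 3 7 5 10 14).
move=> hp; nra.
Qed.

Lemma s_0_3_5_10_14 : 0 < E 0 3 5 10 14.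
Proof.
have h0 := s_3_5_7_10_14.
have := @hF 3 5 10 14 7 0 isT.
rewrite ?(@hsw4 3 5 10 14 7) ?(@hsw3 3 5 10 7 14) ?(@hsw4 3 5 10 14 0) ?(@hsw3 3 5 10 0 14) ?(@hsw2 3 5 0 10 14) ?(@hsw1 3 0 5 10 14).
move=> hp; nra.
Qed.

Lemma s_0_2_5_10_14 : 0 < E 0 2 5 10 14.
Proof.
have h0 := s_0_3_5_10_14.
have := @hF 0 5 10 14 3 2 isT.
rewrite ?(@hsw4 0 5 10 14 3) ?(@hsw3 0 5 10 3 14) ?(@hsw2 0 5 3 10 14) ?(@hsw4 0 5 10 14 2) ?(@hsw3 0 5 10 2 14) ?(@hsw2 0 5 2 10 14).
move=> hp; nra.
Qed.

Lemma s_2_6_9_10_14 : E 2 6 9 10 14 < 0.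
Proof.
have h0 := s_2_6_7_10_14.
have := @hF 2 6 10 14 7 9 isT.
rewrite ?(@hsw4 2 6 10 14 7) ?(@hsw3 2 6 10 7 14) ?(@hsw4 2 6 10 14 9) ?(@hsw3 2 6 10 9 14).
move=> hp; nra.
Qed.

Lemma s_2_6_9_12_14 : E 2 6 9 12 14 < 0.
Proof.
have h0 := s_2_6_9_10_14.
have := @hF 2 6 9 14 10 12 isT.
rewrite ?(@hsw4 2 6 9 14 10) ?(@hsw4 2 6 9 14 12).
move=> hp; nra.
Qed.

Lemma s_2_6_8_9_12 : E 2 6 8 9 12 < 0.
Proof.
have h0 := s_2_6_9_12_14.
have := @hF 2 6 9 12 14 8 isT.
rewrite ?(@hsw4 2 6 9 12 8) ?(@hsw3 2 6 9 8 12).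
move=> hp; nra.
Qed.

Lemma s_0_2_6_8_12 : 0 < E 0 2 6 8 12.
Proof.
have h0 := s_2_6_8_9_12.
have := @hF 2 6 8 12 9 0 isT.
rewrite ?(@hsw4 2 6 8 12 9) ?(@hsw4 2 6 8 12 0) ?(@hsw3 2 6 8 0 12) ?(@hsw2 2 6 0 8 12) ?(@hsw1 2 0 6 8 12).
move=> hp; nra.
Qed.

Lemma s_2_6_8_12_13 : 0 < E 2 6 8 12 13.
Proof.
have h0 := s_2_6_8_9_12.
have := @hF 2 6 8 12 9 13 isT.
rewrite ?(@hsw4 2 6 8 12 9).
move=> hp; nra.
Qed.

Lemma s_0_2_6_8_13 : E 0 2 6 8 13 < 0.
Proof.
have h0 := s_2_6_8_12_13.
have := @hF 2 6 8 13 12 0 isT.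
rewrite ?(@hsw4 2 6 8 13 12) ?(@hsw4 2 6 8 13 0) ?(@hsw3 2 6 8 0 13) ?(@hsw2 2 6 0 8 13) ?(@hsw1 2 0 6 8 13).
move=> hp; nra.
Qed.

Lemma s_0_2_6_8_14 : E 0 2 6 8 14 < 0.
Proof.
have h0 := s_0_1_6_8_14.
have := @hF 0 6 8 14 1 2 isT.
rewrite ?(@hsw4 0 6 8 14 1) ?(@hsw3 0 6 8 1 14) ?(@hsw2 0 6 1 8 14) ?(@hsw4 0 6 8 14 2) ?(@hsw3 0 6 8 2 14) ?(@hsw2 0 6 2 8 14).
move=> hp; nra.
Qed.

Lemma s_0_2_6_9_14 : 0 < E 0 2 6 9 14.
Proof.
have h0 := s_2_6_9_10_14.
have := @hF 2 6 9 14 10 0 isT.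
rewrite ?(@hsw4 2 6 9 14 10) ?(@hsw4 2 6 9 14 0) ?(@hsw3 2 6 9 0 14) ?(@hsw2 2 6 0 9 14) ?(@hsw1 2 0 6 9 14).
move=> hp; nra.
Qed.

Lemma s_0_2_6_10_15 : 0 < E 0 2 6 10 15.
Proof.
have h0 := s_2_6_10_14_15.
have := @hF 2 6 10 15 14 0 isT.
rewrite ?(@hsw4 2 6 10 15 14) ?(@hsw4 2 6 10 15 0) ?(@hsw3 2 6 10 0 15) ?(@hsw2 2 6 0 10 15) ?(@hsw1 2 0 6 10 15).
move=> hp; nra.
Qed.

Lemma s_2_7_9_12_14 : 0 < E 2 7 9 12 14.
Proof.
have h0 := s_2_7_9_10_14.
have := @hF 2 7 9 14 10 12 isT.
rewrite ?(@hsw4 2 7 9 14 10) ?(@hsw4 2 7 9 14 12).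
move=> hp; nra.
Qed.

Lemma s_0_2_7_9_12 : 0 < E 0 2 7 9 12.
Proof.
have h0 := s_2_7_9_12_14.
have := @hF 2 7 9 12 14 0 isT.
rewrite ?(@hsw4 2 7 9 12 0) ?(@hsw3 2 7 9 0 12) ?(@hsw2 2 7 0 9 12) ?(@hsw1 2 0 7 9 12).
move=> hp; nra.
Qed.

Lemma s_0_7_9_14_15 : 0 < E 0 7 9 14 15.
Proof.
have h0 := s_0_2_7_9_14.
have := @hF 0 7 9 14 2 15 isT.
rewrite ?(@hsw4 0 7 9 14 2) ?(@hsw3 0 7 9 2 14) ?(@hsw2 0 7 2 9 14).
move=> hp; nra.
Qed.

Lemma s_0_2_7_9_15 : 0 < E 0 2 7 9 15.
Proof.
have h0 := s_0_7_9_14_15.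
have := @hF 0 7 9 15 14 2 isT.
rewrite ?(@hsw4 0 7 9 15 14) ?(@hsw4 0 7 9 15 2) ?(@hsw3 0 7 9 2 15) ?(@hsw2 0 7 2 9 15).
move=> hp; nra.
Qed.

Lemma s_0_2_7_10_14 : 0 < E 0 2 7 10 14.
Proof.
have h0 := s_2_6_7_10_14.
have := @hF 2 7 10 14 6 0 isT.
rewrite ?(@hsw4 2 7 10 14 6) ?(@hsw3 2 7 10 6 14) ?(@hsw2 2 7 6 10 14) ?(@hsw4 2 7 10 14 0) ?(@hsw3 2 7 10 0 14) ?(@hsw2 2 7 0 10 14) ?(@hsw1 2 0 7 10 14).
move=> hp; nra.
Qed.

Lemma s_0_3_6_8_12 : 0 < E 0 3 6 8 12.
Proof.
have h0 := s_0_6_8_12_14.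
have := @hF 0 6 8 12 14 3 isT.
rewrite ?(@hsw4 0 6 8 12 3) ?(@hsw3 0 6 8 3 12) ?(@hsw2 0 6 3 8 12).
move=> hp; nra.
Qed.

Lemma s_1_3_6_8_15 : E 1 3 6 8 15 < 0.
Proof.
have h0 := s_1_6_8_14_15.
have := @hF 1 6 8 15 14 3 isT.
rewrite ?(@hsw4 1 6 8 15 14) ?(@hsw4 1 6 8 15 3) ?(@hsw3 1 6 8 3 15) ?(@hsw2 1 6 3 8 15).
move=> hp; nra.
Qed.

Lemma s_3_6_8_13_15 : 0 < E 3 6 8 13 15.
Proof.
have h0 := s_1_3_6_8_15.
have := @hF 3 6 8 15 1 13 isT.
rewrite ?(@hsw4 3 6 8 15 1) ?(@hsw3 3 6 8 1 15) ?(@hsw2 3 6 1 8 15) ?(@hsw1 3 1 6 8 15) ?(@hsw4 3 6 8 15 13).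
move=> hp; nra.
Qed.

Lemma s_0_3_6_8_13 : 0 < E 0 3 6 8 13.
Proof.
have h0 := s_3_6_8_13_15.
have := @hF 3 6 8 13 15 0 isT.
rewrite ?(@hsw4 3 6 8 13 0) ?(@hsw3 3 6 8 0 13) ?(@hsw2 3 6 0 8 13) ?(@hsw1 3 0 6 8 13).
move=> hp; nra.
Qed.

Lemma s_0_3_6_8_15 : E 0 3 6 8 15 < 0.
Proof.
have h0 := s_1_3_6_8_15.
have := @hF 3 6 8 15 1 0 isT.
rewrite ?(@hsw4 3 6 8 15 1) ?(@hsw3 3 6 8 1 15) ?(@hsw2 3 6 1 8 15) ?(@hsw1 3 1 6 8 15) ?(@hsw4 3 6 8 15 0) ?(@hsw3 3 6 8 0 15) ?(@hsw2 3 6 0 8 15) ?(@hsw1 3 0 6 8 15).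
move=> hp; nra.
Qed.

Lemma s_0_3_7_9_12 : E 0 3 7 9 12 < 0.
Proof.
have h0 := s_3_7_9_10_12.
have := @hF 3 7 9 12 10 0 isT.
rewrite ?(@hsw4 3 7 9 12 10) ?(@hsw4 3 7 9 12 0) ?(@hsw3 3 7 9 0 12) ?(@hsw2 3 7 0 9 12) ?(@hsw1 3 0 7 9 12).
move=> hp; nra.
Qed.

Lemma s_0_3_7_9_13 : 0 < E 0 3 7 9 13.
Proof.
have h0 := s_3_7_9_12_13.
have := @hF 3 7 9 13 12 0 isT.
rewrite ?(@hsw4 3 7 9 13 12) ?(@hsw4 3 7 9 13 0) ?(@hsw3 3 7 9 0 13) ?(@hsw2 3 7 0 9 13) ?(@hsw1 3 0 7 9 13).
move=> hp; nra.
Qed.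

Lemma s_0_3_7_9_14 : E 0 3 7 9 14 < 0.
Proof.
have h0 := s_0_2_7_9_14.
have := @hF 0 7 9 14 2 3 isT.
rewrite ?(@hsw4 0 7 9 14 2) ?(@hsw3 0 7 9 2 14) ?(@hsw2 0 7 2 9 14) ?(@hsw4 0 7 9 14 3) ?(@hsw3 0 7 9 3 14) ?(@hsw2 0 7 3 9 14).
move=> hp; nra.
Qed.

Lemma s_0_4_6_10_14 : 0 < E 0 4 6 10 14.
Proof.
have h0 := s_0_1_4_10_14.
have := @hF 0 4 10 14 1 6 isT.
rewrite ?(@hsw4 0 4 10 14 1) ?(@hsw3 0 4 10 1 14) ?(@hsw2 0 4 1 10 14) ?(@hsw4 0 4 10 14 6) ?(@hsw3 0 4 10 6 14).
move=> hp; nra.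
Qed.

Lemma s_0_4_7_9_13 : 0 < E 0 4 7 9 13.
Proof.
have h0 := s_0_4_9_10_13.
have := @hF 0 4 9 13 10 7 isT.
rewrite ?(@hsw4 0 4 9 13 10) ?(@hsw4 0 4 9 13 7) ?(@hsw3 0 4 9 7 13).
move=> hp; nra.
Qed.

Lemma s_0_4_7_10_14 : 0 < E 0 4 7 10 14.
Proof.
have h0 := s_0_1_4_10_14.
have := @hF 0 4 10 14 1 7 isT.
rewrite ?(@hsw4 0 4 10 14 1) ?(@hsw3 0 4 10 1 14) ?(@hsw2 0 4 1 10 14) ?(@hsw4 0 4 10 14 7) ?(@hsw3 0 4 10 7 14).
move=> hp; nra.
Qed.

Lemma s_0_4_9_13_15 : 0 < E 0 4 9 13 15.
Proof.
have h0 := s_0_4_9_10_13.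
have := @hF 0 4 9 13 10 15 isT.
rewrite ?(@hsw4 0 4 9 13 10).
move=> hp; nra.
Qed.

Lemma s_0_4_10_11_14 : E 0 4 10 11 14 < 0.
Proof.
have h0 := s_0_1_4_10_14.
have := @hF 0 4 10 14 1 11 isT.
rewrite ?(@hsw4 0 4 10 14 1) ?(@hsw3 0 4 10 1 14) ?(@hsw2 0 4 1 10 14) ?(@hsw4 0 4 10 14 11).
move=> hp; nra.
Qed.

Lemma s_0_4_10_14_15 : 0 < E 0 4 10 14 15.
Proof.
have h0 := s_0_1_4_10_14.
have := @hF 0 4 10 14 1 15 isT.
rewrite ?(@hsw4 0 4 10 14 1) ?(@hsw3 0 4 10 1 14) ?(@hsw2 0 4 1 10 14).
move=> hp; nra.
Qed.

Lemma s_0_5_6_8_14 : E 0 5 6 8 14 < 0.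
Proof.
have h0 := s_0_1_6_8_14.
have := @hF 0 6 8 14 1 5 isT.
rewrite ?(@hsw4 0 6 8 14 1) ?(@hsw3 0 6 8 1 14) ?(@hsw2 0 6 1 8 14) ?(@hsw4 0 6 8 14 5) ?(@hsw3 0 6 8 5 14) ?(@hsw2 0 6 5 8 14).
move=> hp; nra.
Qed.

Lemma s_0_5_6_9_14 : 0 < E 0 5 6 9 14.
Proof.
have h0 := s_0_2_6_9_14.
have := @hF 0 6 9 14 2 5 isT.
rewrite ?(@hsw4 0 6 9 14 2) ?(@hsw3 0 6 9 2 14) ?(@hsw2 0 6 2 9 14) ?(@hsw4 0 6 9 14 5) ?(@hsw3 0 6 9 5 14) ?(@hsw2 0 6 5 9 14).
move=> hp; nra.
Qed.

Lemma s_0_5_6_10_14 : E 0 5 6 10 14 < 0.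
Proof.
have h0 := s_0_3_5_10_14.
have := @hF 0 5 10 14 3 6 isT.
rewrite ?(@hsw4 0 5 10 14 3) ?(@hsw3 0 5 10 3 14) ?(@hsw2 0 5 3 10 14) ?(@hsw4 0 5 10 14 6) ?(@hsw3 0 5 10 6 14).
move=> hp; nra.
Qed.

Lemma s_0_5_10_13_14 : 0 < E 0 5 10 13 14.
Proof.
have h0 := s_0_3_5_10_14.
have := @hF 0 5 10 14 3 13 isT.
rewrite ?(@hsw4 0 5 10 14 3) ?(@hsw3 0 5 10 3 14) ?(@hsw2 0 5 3 10 14) ?(@hsw4 0 5 10 14 13).
move=> hp; nra.
Qed.

Lemma s_0_5_9_10_13 : 0 < E 0 5 9 10 13.
Proof.
have h0 := s_0_5_10_13_14.
have := @hF 0 5 10 13 14 9 isT.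
rewrite ?(@hsw4 0 5 10 13 9) ?(@hsw3 0 5 10 9 13).
move=> hp; nra.
Qed.

Lemma s_0_5_7_9_13 : E 0 5 7 9 13 < 0.
Proof.
have h0 := s_0_5_9_10_13.
have := @hF 0 5 9 13 10 7 isT.
rewrite ?(@hsw4 0 5 9 13 10) ?(@hsw4 0 5 9 13 7) ?(@hsw3 0 5 9 7 13).
move=> hp; nra.
Qed.

Lemma s_0_5_7_9_14 : E 0 5 7 9 14 < 0.
Proof.
have h0 := s_0_2_7_9_14.
have := @hF 0 7 9 14 2 5 isT.
rewrite ?(@hsw4 0 7 9 14 2) ?(@hsw3 0 7 9 2 14) ?(@hsw2 0 7 2 9 14) ?(@hsw4 0 7 9 14 5) ?(@hsw3 0 7 9 5 14) ?(@hsw2 0 7 5 9 14).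
move=> hp; nra.
Qed.

Lemma s_0_5_9_10_14 : E 0 5 9 10 14 < 0.
Proof.
have h0 := s_0_3_5_10_14.
have := @hF 0 5 10 14 3 9 isT.
rewrite ?(@hsw4 0 5 10 14 3) ?(@hsw3 0 5 10 3 14) ?(@hsw2 0 5 3 10 14) ?(@hsw4 0 5 10 14 9) ?(@hsw3 0 5 10 9 14).
move=> hp; nra.
Qed.

Lemma s_0_5_7_9_15 : 0 < E 0 5 7 9 15.
Proof.
have h0 := s_0_7_9_14_15.
have := @hF 0 7 9 15 14 5 isT.
rewrite ?(@hsw4 0 7 9 15 14) ?(@hsw4 0 7 9 15 5) ?(@hsw3 0 7 9 5 15) ?(@hsw2 0 7 5 9 15).
move=> hp; nra.
Qed.

Lemma s_0_5_9_10_15 : E 0 5 9 10 15 < 0.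
Proof.
have h0 := s_0_5_7_9_15.
have := @hF 0 5 9 15 7 10 isT.
rewrite ?(@hsw4 0 5 9 15 7) ?(@hsw3 0 5 9 7 15) ?(@hsw4 0 5 9 15 10).
move=> hp; nra.
Qed.

Lemma s_0_5_9_13_14 : E 0 5 9 13 14 < 0.
Proof.
have h0 := s_0_5_9_10_13.
have := @hF 0 5 9 13 10 14 isT.
rewrite ?(@hsw4 0 5 9 13 10).
move=> hp; nra.
Qed.

Lemma s_0_5_9_14_15 : E 0 5 9 14 15 < 0.
Proof.
have h0 := s_0_5_7_9_15.
have := @hF 0 5 9 15 7 14 isT.
rewrite ?(@hsw4 0 5 9 15 7) ?(@hsw3 0 5 9 7 15) ?(@hsw4 0 5 9 15 14).
move=> hp; nra.
Qed.

Lemma s_0_5_10_14_15 : E 0 5 10 14 15 < 0.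
Proof.
have h0 := s_0_3_5_10_14.
have := @hF 0 5 10 14 3 15 isT.
rewrite ?(@hsw4 0 5 10 14 3) ?(@hsw3 0 5 10 3 14) ?(@hsw2 0 5 3 10 14).
move=> hp; nra.
Qed.

Lemma s_0_6_8_10_14 : E 0 6 8 10 14 < 0.
Proof.
have h0 := s_0_1_6_8_14.
have := @hF 0 6 8 14 1 10 isT.
rewrite ?(@hsw4 0 6 8 14 1) ?(@hsw3 0 6 8 1 14) ?(@hsw2 0 6 1 8 14) ?(@hsw4 0 6 8 14 10).
move=> hp; nra.
Qed.

Lemma s_0_6_8_12_13 : E 0 6 8 12 13 < 0.
Proof.
have h0 := s_0_6_8_12_14.
have := @hF 0 6 8 12 14 13 isT.
move=> hp; nra.
Qed.

Lemma s_0_6_8_12_15 : E 0 6 8 12 15 < 0.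
Proof.
have h0 := s_0_6_8_12_14.
have := @hF 0 6 8 12 14 15 isT.
move=> hp; nra.
Qed.

Lemma s_0_6_8_14_15 : 0 < E 0 6 8 14 15.
Proof.
have h0 := s_0_1_6_8_14.
have := @hF 0 6 8 14 1 15 isT.
rewrite ?(@hsw4 0 6 8 14 1) ?(@hsw3 0 6 8 1 14) ?(@hsw2 0 6 1 8 14).
move=> hp; nra.
Qed.

Lemma s_0_6_9_14_15 : E 0 6 9 14 15 < 0.
Proof.
have h0 := s_0_2_6_9_14.
have := @hF 0 6 9 14 2 15 isT.
rewrite ?(@hsw4 0 6 9 14 2) ?(@hsw3 0 6 9 2 14) ?(@hsw2 0 6 2 9 14).
move=> hp; nra.
Qed.

Lemma s_0_7_9_10_14 : E 0 7 9 10 14 < 0.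
Proof.
have h0 := s_0_2_7_9_14.
have := @hF 0 7 9 14 2 10 isT.
rewrite ?(@hsw4 0 7 9 14 2) ?(@hsw3 0 7 9 2 14) ?(@hsw2 0 7 2 9 14) ?(@hsw4 0 7 9 14 10).
move=> hp; nra.
Qed.

Lemma s_0_7_9_10_15 : 0 < E 0 7 9 10 15.
Proof.
have h0 := s_0_7_9_14_15.
have := @hF 0 7 9 15 14 10 isT.
rewrite ?(@hsw4 0 7 9 15 14) ?(@hsw4 0 7 9 15 10).
move=> hp; nra.
Qed.

Lemma s_0_7_9_12_14 : E 0 7 9 12 14 < 0.
Proof.
have h0 := s_0_2_7_9_14.
have := @hF 0 7 9 14 2 12 isT.
rewrite ?(@hsw4 0 7 9 14 2) ?(@hsw3 0 7 9 2 14) ?(@hsw2 0 7 2 9 14) ?(@hsw4 0 7 9 14 12).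
move=> hp; nra.
Qed.

Lemma s_0_7_9_13_14 : E 0 7 9 13 14 < 0.
Proof.
have h0 := s_0_2_7_9_14.
have := @hF 0 7 9 14 2 13 isT.
rewrite ?(@hsw4 0 7 9 14 2) ?(@hsw3 0 7 9 2 14) ?(@hsw2 0 7 2 9 14) ?(@hsw4 0 7 9 14 13).
move=> hp; nra.
Qed.

Lemma s_0_7_9_13_15 : 0 < E 0 7 9 13 15.
Proof.
have h0 := s_0_7_9_14_15.
have := @hF 0 7 9 15 14 13 isT.
rewrite ?(@hsw4 0 7 9 15 14) ?(@hsw4 0 7 9 15 13).
move=> hp; nra.
Qed.

Lemma s_3_7_10_11_14 : 0 < E 3 7 10 11 14.
Proof.
have h0 := s_2_3_7_10_14.
have := @hF 3 7 10 14 2 11 isT.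
rewrite ?(@hsw4 3 7 10 14 2) ?(@hsw3 3 7 10 2 14) ?(@hsw2 3 7 2 10 14) ?(@hsw1 3 2 7 10 14) ?(@hsw4 3 7 10 14 11).
move=> hp; nra.
Qed.

Lemma s_0_3_7_11_14 : 0 < E 0 3 7 11 14.
Proof.
have h0 := s_3_7_10_11_14.
have := @hF 3 7 11 14 10 0 isT.
rewrite ?(@hsw4 3 7 11 14 10) ?(@hsw3 3 7 11 10 14) ?(@hsw4 3 7 11 14 0) ?(@hsw3 3 7 11 0 14) ?(@hsw2 3 7 0 11 14) ?(@hsw1 3 0 7 11 14).
move=> hp; nra.
Qed.

Lemma s_0_7_10_11_14 : E 0 7 10 11 14 < 0.
Proof.
have h0 := s_0_3_7_11_14.
have := @hF 0 7 11 14 3 10 isT.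
rewrite ?(@hsw4 0 7 11 14 3) ?(@hsw3 0 7 11 3 14) ?(@hsw2 0 7 3 11 14) ?(@hsw4 0 7 11 14 10) ?(@hsw3 0 7 11 10 14).
move=> hp; nra.
Qed.

Lemma s_1_2_6_8_12 : 0 < E 1 2 6 8 12.
Proof.
have h0 := s_2_6_8_9_12.
have := @hF 2 6 8 12 9 1 isT.
rewrite ?(@hsw4 2 6 8 12 9) ?(@hsw4 2 6 8 12 1) ?(@hsw3 2 6 8 1 12) ?(@hsw2 2 6 1 8 12) ?(@hsw1 2 1 6 8 12).
move=> hp; nra.
Qed.

Lemma s_1_2_6_8_14 : 0 < E 1 2 6 8 14.
Proof.
have h0 := s_1_6_8_10_14.
have := @hF 1 6 8 14 10 2 isT.
rewrite ?(@hsw4 1 6 8 14 10) ?(@hsw4 1 6 8 14 2) ?(@hsw3 1 6 8 2 14) ?(@hsw2 1 6 2 8 14).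
move=> hp; nra.
Qed.

Lemma s_1_2_6_8_15 : E 1 2 6 8 15 < 0.
Proof.
have h0 := s_1_6_8_14_15.
have := @hF 1 6 8 15 14 2 isT.
rewrite ?(@hsw4 1 6 8 15 14) ?(@hsw4 1 6 8 15 2) ?(@hsw3 1 6 8 2 15) ?(@hsw2 1 6 2 8 15).
move=> hp; nra.
Qed.

Lemma s_1_2_6_9_12 : E 1 2 6 9 12 < 0.
Proof.
have h0 := s_2_6_9_12_14.
have := @hF 2 6 9 12 14 1 isT.
rewrite ?(@hsw4 2 6 9 12 1) ?(@hsw3 2 6 9 1 12) ?(@hsw2 2 6 1 9 12) ?(@hsw1 2 1 6 9 12).
move=> hp; nra.
Qed.

Lemma s_1_2_6_10_15 : 0 < E 1 2 6 10 15.
Proof.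
have h0 := s_2_6_10_14_15.
have := @hF 2 6 10 15 14 1 isT.
rewrite ?(@hsw4 2 6 10 15 14) ?(@hsw4 2 6 10 15 1) ?(@hsw3 2 6 10 1 15) ?(@hsw2 2 6 1 10 15) ?(@hsw1 2 1 6 10 15).
move=> hp; nra.
Qed.

Lemma s_2_6_10_11_15 : E 2 6 10 11 15 < 0.
Proof.
have h0 := s_2_6_10_14_15.
have := @hF 2 6 10 15 14 11 isT.
rewrite ?(@hsw4 2 6 10 15 14) ?(@hsw4 2 6 10 15 11).
move=> hp; nra.
Qed.

Lemma s_1_2_6_11_15 : E 1 2 6 11 15 < 0.
Proof.
have h0 := s_2_6_10_11_15.
have := @hF 2 6 11 15 10 1 isT.
rewrite ?(@hsw4 2 6 11 15 10) ?(@hsw3 2 6 11 10 15) ?(@hsw4 2 6 11 15 1) ?(@hsw3 2 6 11 1 15) ?(@hsw2 2 6 1 11 15) ?(@hsw1 2 1 6 11 15).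
move=> hp; nra.
Qed.

Lemma s_1_2_7_9_13 : 0 < E 1 2 7 9 13.
Proof.
have h0 := s_1_3_7_9_13.
have := @hF 1 7 9 13 3 2 isT.
rewrite ?(@hsw4 1 7 9 13 3) ?(@hsw3 1 7 9 3 13) ?(@hsw2 1 7 3 9 13) ?(@hsw4 1 7 9 13 2) ?(@hsw3 1 7 9 2 13) ?(@hsw2 1 7 2 9 13).
move=> hp; nra.
Qed.

Lemma s_1_2_7_9_14 : E 1 2 7 9 14 < 0.
Proof.
have h0 := s_2_7_9_10_14.
have := @hF 2 7 9 14 10 1 isT.
rewrite ?(@hsw4 2 7 9 14 10) ?(@hsw4 2 7 9 14 1) ?(@hsw3 2 7 9 1 14) ?(@hsw2 2 7 1 9 14) ?(@hsw1 2 1 7 9 14).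
move=> hp; nra.
Qed.

Lemma s_0_1_7_9_15 : 0 < E 0 1 7 9 15.
Proof.
have h0 := s_0_7_9_14_15.
have := @hF 0 7 9 15 14 1 isT.
rewrite ?(@hsw4 0 7 9 15 14) ?(@hsw4 0 7 9 15 1) ?(@hsw3 0 7 9 1 15) ?(@hsw2 0 7 1 9 15).
move=> hp; nra.
Qed.

Lemma s_1_2_7_9_15 : E 1 2 7 9 15 < 0.
Proof.
have h0 := s_0_1_7_9_15.
have := @hF 1 7 9 15 0 2 isT.
rewrite ?(@hsw4 1 7 9 15 0) ?(@hsw3 1 7 9 0 15) ?(@hsw2 1 7 0 9 15) ?(@hsw1 1 0 7 9 15) ?(@hsw4 1 7 9 15 2) ?(@hsw3 1 7 9 2 15) ?(@hsw2 1 7 2 9 15).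
move=> hp; nra.
Qed.

Lemma s_1_5_6_8_15 : E 1 5 6 8 15 < 0.
Proof.
have h0 := s_1_6_8_14_15.
have := @hF 1 6 8 15 14 5 isT.
rewrite ?(@hsw4 1 6 8 15 14) ?(@hsw4 1 6 8 15 5) ?(@hsw3 1 6 8 5 15) ?(@hsw2 1 6 5 8 15).
move=> hp; nra.
Qed.

Lemma s_1_5_7_9_15 : E 1 5 7 9 15 < 0.
Proof.
have h0 := s_0_1_7_9_15.
have := @hF 1 7 9 15 0 5 isT.
rewrite ?(@hsw4 1 7 9 15 0) ?(@hsw3 1 7 9 0 15) ?(@hsw2 1 7 0 9 15) ?(@hsw1 1 0 7 9 15) ?(@hsw4 1 7 9 15 5) ?(@hsw3 1 7 9 5 15) ?(@hsw2 1 7 5 9 15).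
move=> hp; nra.
Qed.

Lemma s_1_5_6_9_15 : E 1 5 6 9 15 < 0.
Proof.
have h0 := s_1_5_7_9_15.
have := @hF 1 5 9 15 7 6 isT.
rewrite ?(@hsw4 1 5 9 15 7) ?(@hsw3 1 5 9 7 15) ?(@hsw4 1 5 9 15 6) ?(@hsw3 1 5 9 6 15).
move=> hp; nra.
Qed.

Lemma s_1_5_6_10_15 : 0 < E 1 5 6 10 15.
Proof.
have h0 := s_1_6_10_14_15.
have := @hF 1 6 10 15 14 5 isT.
rewrite ?(@hsw4 1 6 10 15 14) ?(@hsw4 1 6 10 15 5) ?(@hsw3 1 6 10 5 15) ?(@hsw2 1 6 5 10 15).
move=> hp; nra.
Qed.

Lemma s_1_4_10_11_15 : E 1 4 10 11 15 < 0.
Proof.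
have h0 := s_1_4_10_14_15.
have := @hF 1 4 10 15 14 11 isT.
rewrite ?(@hsw4 1 4 10 15 14) ?(@hsw4 1 4 10 15 11).
move=> hp; nra.
Qed.

Lemma s_1_4_5_11_15 : E 1 4 5 11 15 < 0.
Proof.
have h0 := s_1_4_10_11_15.
have := @hF 1 4 11 15 10 5 isT.
rewrite ?(@hsw4 1 4 11 15 10) ?(@hsw3 1 4 11 10 15) ?(@hsw4 1 4 11 15 5) ?(@hsw3 1 4 11 5 15).
move=> hp; nra.
Qed.

Lemma s_1_5_6_11_15 : 0 < E 1 5 6 11 15.
Proof.
have h0 := s_1_4_5_11_15.
have := @hF 1 5 11 15 4 6 isT.
rewrite ?(@hsw4 1 5 11 15 4) ?(@hsw3 1 5 11 4 15) ?(@hsw2 1 5 4 11 15) ?(@hsw4 1 5 11 15 6) ?(@hsw3 1 5 11 6 15).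
move=> hp; nra.
Qed.

Lemma s_1_6_8_11_15 : E 1 6 8 11 15 < 0.
Proof.
have h0 := s_1_6_8_14_15.
have := @hF 1 6 8 15 14 11 isT.
rewrite ?(@hsw4 1 6 8 15 14) ?(@hsw4 1 6 8 15 11).
move=> hp; nra.
Qed.

Lemma s_1_6_8_12_14 : 0 < E 1 6 8 12 14.
Proof.
have h0 := s_1_6_8_10_14.
have := @hF 1 6 8 14 10 12 isT.
rewrite ?(@hsw4 1 6 8 14 10) ?(@hsw4 1 6 8 14 12).
move=> hp; nra.
Qed.

Lemma s_1_6_9_10_15 : E 1 6 9 10 15 < 0.
Proof.
have h0 := s_1_6_10_14_15.
have := @hF 1 6 10 15 14 9 isT.
rewrite ?(@hsw4 1 6 10 15 14) ?(@hsw4 1 6 10 15 9) ?(@hsw3 1 6 10 9 15).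
move=> hp; nra.
Qed.

Lemma s_1_7_9_13_14 : E 1 7 9 13 14 < 0.
Proof.
have h0 := s_1_3_7_9_13.
have := @hF 1 7 9 13 3 14 isT.
rewrite ?(@hsw4 1 7 9 13 3) ?(@hsw3 1 7 9 3 13) ?(@hsw2 1 7 3 9 13).
move=> hp; nra.
Qed.

Lemma s_2_7_10_12_14 : E 2 7 10 12 14 < 0.
Proof.
have h0 := s_2_6_7_10_14.
have := @hF 2 7 10 14 6 12 isT.
rewrite ?(@hsw4 2 7 10 14 6) ?(@hsw3 2 7 10 6 14) ?(@hsw2 2 7 6 10 14) ?(@hsw4 2 7 10 14 12).
move=> hp; nra.
Qed.

Lemma s_2_5_7_10_12 : 0 < E 2 5 7 10 12.
Proof.
have h0 := s_2_7_10_12_14.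
have := @hF 2 7 10 12 14 5 isT.
rewrite ?(@hsw4 2 7 10 12 5) ?(@hsw3 2 7 10 5 12) ?(@hsw2 2 7 5 10 12).
move=> hp; nra.
Qed.

Lemma s_2_3_5_10_12 : E 2 3 5 10 12 < 0.
Proof.
have h0 := s_2_5_7_10_12.
have := @hF 2 5 10 12 7 3 isT.
rewrite ?(@hsw4 2 5 10 12 7) ?(@hsw3 2 5 10 7 12) ?(@hsw4 2 5 10 12 3) ?(@hsw3 2 5 10 3 12) ?(@hsw2 2 5 3 10 12).
move=> hp; nra.
Qed.

Lemma s_2_3_5_10_14 : 0 < E 2 3 5 10 14.
Proof.
have h0 := s_3_5_7_10_14.
have := @hF 3 5 10 14 7 2 isT.
rewrite ?(@hsw4 3 5 10 14 7) ?(@hsw3 3 5 10 7 14) ?(@hsw4 3 5 10 14 2) ?(@hsw3 3 5 10 2 14) ?(@hsw2 3 5 2 10 14) ?(@hsw1 3 2 5 10 14).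
move=> hp; nra.
Qed.

Lemma s_2_3_6_8_12 : E 2 3 6 8 12 < 0.
Proof.
have h0 := s_2_6_8_9_12.
have := @hF 2 6 8 12 9 3 isT.
rewrite ?(@hsw4 2 6 8 12 9) ?(@hsw4 2 6 8 12 3) ?(@hsw3 2 6 8 3 12) ?(@hsw2 2 6 3 8 12).
move=> hp; nra.
Qed.

Lemma s_2_3_6_8_15 : E 2 3 6 8 15 < 0.
Proof.
have h0 := s_1_3_6_8_15.
have := @hF 3 6 8 15 1 2 isT.
rewrite ?(@hsw4 3 6 8 15 1) ?(@hsw3 3 6 8 1 15) ?(@hsw2 3 6 1 8 15) ?(@hsw1 3 1 6 8 15) ?(@hsw4 3 6 8 15 2) ?(@hsw3 3 6 8 2 15) ?(@hsw2 3 6 2 8 15) ?(@hsw1 3 2 6 8 15).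
move=> hp; nra.
Qed.

Lemma s_2_3_6_10_14 : 0 < E 2 3 6 10 14.
Proof.
have h0 := s_2_6_7_10_14.
have := @hF 2 6 10 14 7 3 isT.
rewrite ?(@hsw4 2 6 10 14 7) ?(@hsw3 2 6 10 7 14) ?(@hsw4 2 6 10 14 3) ?(@hsw3 2 6 10 3 14) ?(@hsw2 2 6 3 10 14).
move=> hp; nra.
Qed.

Lemma s_2_4_5_10_12 : E 2 4 5 10 12 < 0.
Proof.
have h0 := s_2_5_7_10_12.
have := @hF 2 5 10 12 7 4 isT.
rewrite ?(@hsw4 2 5 10 12 7) ?(@hsw3 2 5 10 7 12) ?(@hsw4 2 5 10 12 4) ?(@hsw3 2 5 10 4 12) ?(@hsw2 2 5 4 10 12).
move=> hp; nra.
Qed.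

Lemma s_2_4_10_13_15 : 0 < E 2 4 10 13 15.
Proof.
have h0 := s_2_4_6_10_15.
have := @hF 2 4 10 15 6 13 isT.
rewrite ?(@hsw4 2 4 10 15 6) ?(@hsw3 2 4 10 6 15) ?(@hsw4 2 4 10 15 13).
move=> hp; nra.
Qed.

Lemma s_2_4_5_10_13 : 0 < E 2 4 5 10 13.
Proof.
have h0 := s_2_4_10_13_15.
have := @hF 2 4 10 13 15 5 isT.
rewrite ?(@hsw4 2 4 10 13 5) ?(@hsw3 2 4 10 5 13).
move=> hp; nra.
Qed.

Lemma s_2_4_5_10_15 : E 2 4 5 10 15 < 0.
Proof.
have h0 := s_2_4_6_10_15.
have := @hF 2 4 10 15 6 5 isT.
rewrite ?(@hsw4 2 4 10 15 6) ?(@hsw3 2 4 10 6 15) ?(@hsw4 2 4 10 15 5) ?(@hsw3 2 4 10 5 15).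
move=> hp; nra.
Qed.

Lemma s_2_4_6_10_13 : 0 < E 2 4 6 10 13.
Proof.
have h0 := s_2_4_10_13_15.
have := @hF 2 4 10 13 15 6 isT.
rewrite ?(@hsw4 2 4 10 13 6) ?(@hsw3 2 4 10 6 13).
move=> hp; nra.
Qed.

Lemma s_2_4_6_10_14 : 0 < E 2 4 6 10 14.
Proof.
have h0 := s_2_6_7_10_14.
have := @hF 2 6 10 14 7 4 isT.
rewrite ?(@hsw4 2 6 10 14 7) ?(@hsw3 2 6 10 7 14) ?(@hsw4 2 6 10 14 4) ?(@hsw3 2 6 10 4 14) ?(@hsw2 2 6 4 10 14).
move=> hp; nra.
Qed.

Lemma s_2_4_7_10_12 : 0 < E 2 4 7 10 12.
Proof.
have h0 := s_2_7_10_12_14.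
have := @hF 2 7 10 12 14 4 isT.
rewrite ?(@hsw4 2 7 10 12 4) ?(@hsw3 2 7 10 4 12) ?(@hsw2 2 7 4 10 12).
move=> hp; nra.
Qed.

Lemma s_2_4_7_10_13 : 0 < E 2 4 7 10 13.
Proof.
have h0 := s_2_4_10_13_15.
have := @hF 2 4 10 13 15 7 isT.
rewrite ?(@hsw4 2 4 10 13 7) ?(@hsw3 2 4 10 7 13).
move=> hp; nra.
Qed.

Lemma s_2_4_7_10_14 : E 2 4 7 10 14 < 0.
Proof.
have h0 := s_2_6_7_10_14.
have := @hF 2 7 10 14 6 4 isT.
rewrite ?(@hsw4 2 7 10 14 6) ?(@hsw3 2 7 10 6 14) ?(@hsw2 2 7 6 10 14) ?(@hsw4 2 7 10 14 4) ?(@hsw3 2 7 10 4 14) ?(@hsw2 2 7 4 10 14).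
move=> hp; nra.
Qed.

Lemma s_2_4_10_12_13 : E 2 4 10 12 13 < 0.
Proof.
have h0 := s_2_4_10_13_15.
have := @hF 2 4 10 13 15 12 isT.
rewrite ?(@hsw4 2 4 10 13 12).
move=> hp; nra.
Qed.

Lemma s_2_4_10_13_14 : 0 < E 2 4 10 13 14.
Proof.
have h0 := s_2_4_10_13_15.
have := @hF 2 4 10 13 15 14 isT.
move=> hp; nra.
Qed.

Lemma s_2_5_6_10_12 : 0 < E 2 5 6 10 12.
Proof.
have h0 := s_2_5_7_10_12.
have := @hF 2 5 10 12 7 6 isT.
rewrite ?(@hsw4 2 5 10 12 7) ?(@hsw3 2 5 10 7 12) ?(@hsw4 2 5 10 12 6) ?(@hsw3 2 5 10 6 12).
move=> hp; nra.
Qed.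

Lemma s_2_5_10_12_13 : 0 < E 2 5 10 12 13.
Proof.
have h0 := s_2_5_7_10_12.
have := @hF 2 5 10 12 7 13 isT.
rewrite ?(@hsw4 2 5 10 12 7) ?(@hsw3 2 5 10 7 12).
move=> hp; nra.
Qed.

Lemma s_2_5_6_10_13 : E 2 5 6 10 13 < 0.
Proof.
have h0 := s_2_5_10_12_13.
have := @hF 2 5 10 13 12 6 isT.
rewrite ?(@hsw4 2 5 10 13 12) ?(@hsw4 2 5 10 13 6) ?(@hsw3 2 5 10 6 13).
move=> hp; nra.
Qed.

Lemma s_2_5_6_10_14 : 0 < E 2 5 6 10 14.
Proof.
have h0 := s_2_6_7_10_14.
have := @hF 2 6 10 14 7 5 isT.
rewrite ?(@hsw4 2 6 10 14 7) ?(@hsw3 2 6 10 7 14) ?(@hsw4 2 6 10 14 5) ?(@hsw3 2 6 10 5 14) ?(@hsw2 2 6 5 10 14).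
move=> hp; nra.
Qed.

Lemma s_2_5_6_10_15 : E 2 5 6 10 15 < 0.
Proof.
have h0 := s_2_6_10_14_15.
have := @hF 2 6 10 15 14 5 isT.
rewrite ?(@hsw4 2 6 10 15 14) ?(@hsw4 2 6 10 15 5) ?(@hsw3 2 6 10 5 15) ?(@hsw2 2 6 5 10 15).
move=> hp; nra.
Qed.

Lemma s_2_5_7_10_14 : E 2 5 7 10 14 < 0.
Proof.
have h0 := s_2_6_7_10_14.
have := @hF 2 7 10 14 6 5 isT.
rewrite ?(@hsw4 2 7 10 14 6) ?(@hsw3 2 7 10 6 14) ?(@hsw2 2 7 6 10 14) ?(@hsw4 2 7 10 14 5) ?(@hsw3 2 7 10 5 14) ?(@hsw2 2 7 5 10 14).
move=> hp; nra.
Qed.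

Lemma s_2_5_10_11_12 : E 2 5 10 11 12 < 0.
Proof.
have h0 := s_2_5_7_10_12.
have := @hF 2 5 10 12 7 11 isT.
rewrite ?(@hsw4 2 5 10 12 7) ?(@hsw3 2 5 10 7 12) ?(@hsw4 2 5 10 12 11).
move=> hp; nra.
Qed.

Lemma s_2_5_10_11_13 : 0 < E 2 5 10 11 13.
Proof.
have h0 := s_2_5_10_12_13.
have := @hF 2 5 10 13 12 11 isT.
rewrite ?(@hsw4 2 5 10 13 12) ?(@hsw4 2 5 10 13 11).
move=> hp; nra.
Qed.

Lemma s_2_5_10_12_14 : 0 < E 2 5 10 12 14.
Proof.
have h0 := s_2_5_7_10_12.
have := @hF 2 5 10 12 7 14 isT.
rewrite ?(@hsw4 2 5 10 12 7) ?(@hsw3 2 5 10 7 12).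
move=> hp; nra.
Qed.

Lemma s_2_5_10_12_15 : 0 < E 2 5 10 12 15.
Proof.
have h0 := s_2_5_7_10_12.
have := @hF 2 5 10 12 7 15 isT.
rewrite ?(@hsw4 2 5 10 12 7) ?(@hsw3 2 5 10 7 12).
move=> hp; nra.
Qed.

Lemma s_2_6_7_10_12 : 0 < E 2 6 7 10 12.
Proof.
have h0 := s_2_7_10_12_14.
have := @hF 2 7 10 12 14 6 isT.
rewrite ?(@hsw4 2 7 10 12 6) ?(@hsw3 2 7 10 6 12) ?(@hsw2 2 7 6 10 12).
move=> hp; nra.
Qed.

Lemma s_2_6_8_9_13 : 0 < E 2 6 8 9 13.
Proof.
have h0 := s_2_6_8_12_13.
have := @hF 2 6 8 13 12 9 isT.
rewrite ?(@hsw4 2 6 8 13 12) ?(@hsw4 2 6 8 13 9).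
move=> hp; nra.
Qed.

Lemma s_2_6_8_9_14 : 0 < E 2 6 8 9 14.
Proof.
have h0 := s_2_6_9_10_14.
have := @hF 2 6 9 14 10 8 isT.
rewrite ?(@hsw4 2 6 9 14 10) ?(@hsw4 2 6 9 14 8) ?(@hsw3 2 6 9 8 14).
move=> hp; nra.
Qed.

Lemma s_2_6_8_10_12 : E 2 6 8 10 12 < 0.
Proof.
have h0 := s_2_6_8_9_12.
have := @hF 2 6 8 12 9 10 isT.
rewrite ?(@hsw4 2 6 8 12 9) ?(@hsw4 2 6 8 12 10).
move=> hp; nra.
Qed.

Lemma s_2_6_8_10_13 : 0 < E 2 6 8 10 13.
Proof.
have h0 := s_2_6_8_12_13.
have := @hF 2 6 8 13 12 10 isT.
rewrite ?(@hsw4 2 6 8 13 12) ?(@hsw4 2 6 8 13 10).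
move=> hp; nra.
Qed.

Lemma s_2_6_8_10_14 : E 2 6 8 10 14 < 0.
Proof.
have h0 := s_2_6_7_10_14.
have := @hF 2 6 10 14 7 8 isT.
rewrite ?(@hsw4 2 6 10 14 7) ?(@hsw3 2 6 10 7 14) ?(@hsw4 2 6 10 14 8) ?(@hsw3 2 6 10 8 14).
move=> hp; nra.
Qed.

Lemma s_2_6_8_10_15 : 0 < E 2 6 8 10 15.
Proof.
have h0 := s_2_6_10_14_15.
have := @hF 2 6 10 15 14 8 isT.
rewrite ?(@hsw4 2 6 10 15 14) ?(@hsw4 2 6 10 15 8) ?(@hsw3 2 6 10 8 15).
move=> hp; nra.
Qed.

Lemma s_2_6_8_11_12 : E 2 6 8 11 12 < 0.
Proof.
have h0 := s_2_6_8_9_12.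
have := @hF 2 6 8 12 9 11 isT.
rewrite ?(@hsw4 2 6 8 12 9) ?(@hsw4 2 6 8 12 11).
move=> hp; nra.
Qed.

Lemma s_2_6_8_11_15 : E 2 6 8 11 15 < 0.
Proof.
have h0 := s_2_6_10_11_15.
have := @hF 2 6 11 15 10 8 isT.
rewrite ?(@hsw4 2 6 11 15 10) ?(@hsw3 2 6 11 10 15) ?(@hsw4 2 6 11 15 8) ?(@hsw3 2 6 11 8 15).
move=> hp; nra.
Qed.

Lemma s_2_6_8_12_14 : 0 < E 2 6 8 12 14.
Proof.
have h0 := s_2_6_8_9_12.
have := @hF 2 6 8 12 9 14 isT.
rewrite ?(@hsw4 2 6 8 12 9).
move=> hp; nra.
Qed.

Lemma s_2_6_8_12_15 : 0 < E 2 6 8 12 15.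
Proof.
have h0 := s_2_6_8_9_12.
have := @hF 2 6 8 12 9 15 isT.
rewrite ?(@hsw4 2 6 8 12 9).
move=> hp; nra.
Qed.

Lemma s_2_6_8_13_14 : E 2 6 8 13 14 < 0.
Proof.
have h0 := s_2_6_8_12_13.
have := @hF 2 6 8 13 12 14 isT.
rewrite ?(@hsw4 2 6 8 13 12).
move=> hp; nra.
Qed.

Lemma s_2_6_8_13_15 : E 2 6 8 13 15 < 0.
Proof.
have h0 := s_2_6_8_12_13.
have := @hF 2 6 8 13 12 15 isT.
rewrite ?(@hsw4 2 6 8 13 12).
move=> hp; nra.
Qed.

Lemma s_2_6_9_10_12 : 0 < E 2 6 9 10 12.
Proof.
have h0 := s_2_6_9_12_14.
have := @hF 2 6 9 12 14 10 isT.
rewrite ?(@hsw4 2 6 9 12 10).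
move=> hp; nra.
Qed.

Lemma s_2_6_9_10_15 : 0 < E 2 6 9 10 15.
Proof.
have h0 := s_2_6_10_14_15.
have := @hF 2 6 10 15 14 9 isT.
rewrite ?(@hsw4 2 6 10 15 14) ?(@hsw4 2 6 10 15 9) ?(@hsw3 2 6 10 9 15).
move=> hp; nra.
Qed.

Lemma s_2_6_9_11_12 : 0 < E 2 6 9 11 12.
Proof.
have h0 := s_2_6_9_12_14.
have := @hF 2 6 9 12 14 11 isT.
rewrite ?(@hsw4 2 6 9 12 11).
move=> hp; nra.
Qed.

Lemma s_2_6_11_13_15 : 0 < E 2 6 11 13 15.
Proof.
have h0 := s_2_6_10_11_15.
have := @hF 2 6 11 15 10 13 isT.
rewrite ?(@hsw4 2 6 11 15 10) ?(@hsw3 2 6 11 10 15) ?(@hsw4 2 6 11 15 13).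
move=> hp; nra.
Qed.

Lemma s_2_6_9_11_13 : 0 < E 2 6 9 11 13.
Proof.
have h0 := s_2_6_11_13_15.
have := @hF 2 6 11 13 15 9 isT.
rewrite ?(@hsw4 2 6 11 13 9) ?(@hsw3 2 6 11 9 13).
move=> hp; nra.
Qed.

Lemma s_2_6_9_11_15 : E 2 6 9 11 15 < 0.
Proof.
have h0 := s_2_6_10_11_15.
have := @hF 2 6 11 15 10 9 isT.
rewrite ?(@hsw4 2 6 11 15 10) ?(@hsw3 2 6 11 10 15) ?(@hsw4 2 6 11 15 9) ?(@hsw3 2 6 11 9 15).
move=> hp; nra.
Qed.

Lemma s_2_6_9_12_13 : E 2 6 9 12 13 < 0.
Proof.
have h0 := s_2_6_9_12_14.
have := @hF 2 6 9 12 14 13 isT.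
move=> hp; nra.
Qed.

Lemma s_2_6_9_13_14 : E 2 6 9 13 14 < 0.
Proof.
have h0 := s_2_6_9_10_14.
have := @hF 2 6 9 14 10 13 isT.
rewrite ?(@hsw4 2 6 9 14 10) ?(@hsw4 2 6 9 14 13).
move=> hp; nra.
Qed.

Lemma s_2_6_9_14_15 : 0 < E 2 6 9 14 15.
Proof.
have h0 := s_2_6_9_10_14.
have := @hF 2 6 9 14 10 15 isT.
rewrite ?(@hsw4 2 6 9 14 10).
move=> hp; nra.
Qed.

Lemma s_2_6_10_11_13 : 0 < E 2 6 10 11 13.
Proof.
have h0 := s_2_6_11_13_15.
have := @hF 2 6 11 13 15 10 isT.
rewrite ?(@hsw4 2 6 11 13 10) ?(@hsw3 2 6 11 10 13).
move=> hp; nra.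
Qed.

Lemma s_2_6_10_11_14 : 0 < E 2 6 10 11 14.
Proof.
have h0 := s_2_6_7_10_14.
have := @hF 2 6 10 14 7 11 isT.
rewrite ?(@hsw4 2 6 10 14 7) ?(@hsw3 2 6 10 7 14) ?(@hsw4 2 6 10 14 11).
move=> hp; nra.
Qed.

Lemma s_2_6_10_12_14 : 0 < E 2 6 10 12 14.
Proof.
have h0 := s_2_6_7_10_14.
have := @hF 2 6 10 14 7 12 isT.
rewrite ?(@hsw4 2 6 10 14 7) ?(@hsw3 2 6 10 7 14) ?(@hsw4 2 6 10 14 12).
move=> hp; nra.
Qed.

Lemma s_2_6_10_13_14 : 0 < E 2 6 10 13 14.
Proof.
have h0 := s_2_6_7_10_14.
have := @hF 2 6 10 14 7 13 isT.
rewrite ?(@hsw4 2 6 10 14 7) ?(@hsw3 2 6 10 7 14) ?(@hsw4 2 6 10 14 13).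
move=> hp; nra.
Qed.

Lemma s_2_6_10_13_15 : E 2 6 10 13 15 < 0.
Proof.
have h0 := s_2_6_10_14_15.
have := @hF 2 6 10 15 14 13 isT.
rewrite ?(@hsw4 2 6 10 15 14) ?(@hsw4 2 6 10 15 13).
move=> hp; nra.
Qed.

Lemma s_2_7_9_14_15 : E 2 7 9 14 15 < 0.
Proof.
have h0 := s_2_7_9_10_14.
have := @hF 2 7 9 14 10 15 isT.
rewrite ?(@hsw4 2 7 9 14 10).
move=> hp; nra.
Qed.

Lemma s_2_7_10_11_12 : 0 < E 2 7 10 11 12.
Proof.
have h0 := s_2_7_10_12_14.
have := @hF 2 7 10 12 14 11 isT.
rewrite ?(@hsw4 2 7 10 12 11).
move=> hp; nra.
Qed.

Lemma s_2_7_10_11_14 : E 2 7 10 11 14 < 0.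
Proof.
have h0 := s_2_6_7_10_14.
have := @hF 2 7 10 14 6 11 isT.
rewrite ?(@hsw4 2 7 10 14 6) ?(@hsw3 2 7 10 6 14) ?(@hsw2 2 7 6 10 14) ?(@hsw4 2 7 10 14 11).
move=> hp; nra.
Qed.

Lemma s_0_1_2_6_8 : 0 < E 0 1 2 6 8.
Proof.
have h0 := s_0_1_6_8_12.
have h1 := s_0_1_6_8_14.
have h2 := s_1_2_6_8_12.
have h3 := s_1_2_6_8_14.
have h4 := s_1_6_8_12_14.
have := @hGP 1 6 8 0 2 12 14.
rewrite ?(@hsw3 1 6 8 0 2) ?(@hsw4 1 6 0 8 2) ?(@hsw2 1 6 0 2 8) ?(@hsw3 1 0 6 2 8) ?(@hsw1 1 0 2 6 8) ?(@hsw3 1 6 8 0 12) ?(@hsw2 1 6 0 8 12) ?(@hsw1 1 0 6 8 12) ?(@hsw3 1 6 8 2 14) ?(@hsw2 1 6 2 8 14) ?(@hsw3 1 6 8 0 14) ?(@hsw2 1 6 0 8 14) ?(@hsw1 1 0 6 8 14) ?(@hsw3 1 6 8 2 12) ?(@hsw2 1 6 2 8 12).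
move=> hp; nra.
Qed.

Lemma s_0_1_2_7_9 : E 0 1 2 7 9 < 0.
Proof.
have h0 := s_0_1_7_9_13.
have h1 := s_0_1_7_9_14.
have h2 := s_1_2_7_9_13.
have h3 := s_1_2_7_9_14.
have h4 := s_1_7_9_13_14.
have := @hGP 1 7 9 0 2 13 14.
rewrite ?(@hsw3 1 7 9 0 2) ?(@hsw4 1 7 0 9 2) ?(@hsw2 1 7 0 2 9) ?(@hsw3 1 0 7 2 9) ?(@hsw1 1 0 2 7 9) ?(@hsw3 1 7 9 0 13) ?(@hsw2 1 7 0 9 13) ?(@hsw1 1 0 7 9 13) ?(@hsw3 1 7 9 2 14) ?(@hsw2 1 7 2 9 14) ?(@hsw3 1 7 9 0 14) ?(@hsw2 1 7 0 9 14) ?(@hsw1 1 0 7 9 14) ?(@hsw3 1 7 9 2 13) ?(@hsw2 1 7 2 9 13).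
move=> hp; nra.
Qed.

Lemma s_0_1_5_6_14 : E 0 1 5 6 14 < 0.
Proof.
have h0 := s_0_1_6_8_14.
have h1 := s_0_1_6_10_14.
have h2 := s_0_5_6_8_14.
have h3 := s_0_5_6_10_14.
have h4 := s_0_6_8_10_14.
have := @hGP 0 6 14 1 5 8 10.
rewrite ?(@hsw3 0 6 14 1 5) ?(@hsw4 0 6 1 14 5) ?(@hsw2 0 6 1 5 14) ?(@hsw3 0 1 6 5 14) ?(@hsw3 0 6 14 8 10) ?(@hsw4 0 6 8 14 10) ?(@hsw3 0 6 14 1 8) ?(@hsw4 0 6 1 14 8) ?(@hsw2 0 6 1 8 14) ?(@hsw3 0 6 14 5 10) ?(@hsw4 0 6 5 14 10) ?(@hsw2 0 6 5 10 14) ?(@hsw3 0 6 14 1 10) ?(@hsw4 0 6 1 14 10) ?(@hsw2 0 6 1 10 14) ?(@hsw3 0 6 14 5 8) ?(@hsw4 0 6 5 14 8) ?(@hsw2 0 6 5 8 14).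
move=> hp; nra.
Qed.

Lemma s_0_5_6_14_15 : E 0 5 6 14 15 < 0.
Proof.
have h0 := s_0_5_6_9_14.
have h1 := s_0_5_6_10_14.
have h2 := s_0_5_9_10_14.
have h3 := s_0_5_9_14_15.
have h4 := s_0_5_10_14_15.
have := @hGP 0 5 14 6 9 10 15.
rewrite ?(@hsw3 0 5 14 6 9) ?(@hsw4 0 5 6 14 9) ?(@hsw3 0 5 14 10 15) ?(@hsw3 0 5 14 6 10) ?(@hsw4 0 5 6 14 10) ?(@hsw3 0 5 14 9 15) ?(@hsw3 0 5 14 6 15) ?(@hsw3 0 5 14 9 10) ?(@hsw4 0 5 9 14 10).
move=> hp; nra.
Qed.

Lemma s_0_1_6_14_15 : E 0 1 6 14 15 < 0.
Proof.
have h0 := s_0_1_5_6_14.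
have h1 := s_0_1_6_8_14.
have h2 := s_0_5_6_8_14.
have h3 := s_0_5_6_14_15.
have h4 := s_0_6_8_14_15.
have := @hGP 0 6 14 1 5 8 15.
rewrite ?(@hsw3 0 6 14 1 5) ?(@hsw4 0 6 1 14 5) ?(@hsw2 0 6 1 5 14) ?(@hsw3 0 1 6 5 14) ?(@hsw3 0 6 14 8 15) ?(@hsw3 0 6 14 1 8) ?(@hsw4 0 6 1 14 8) ?(@hsw2 0 6 1 8 14) ?(@hsw3 0 6 14 5 15) ?(@hsw2 0 6 5 14 15) ?(@hsw3 0 6 14 1 15) ?(@hsw2 0 6 1 14 15) ?(@hsw3 0 6 14 5 8) ?(@hsw4 0 6 5 14 8) ?(@hsw2 0 6 5 8 14).
move=> hp; nra.
Qed.

Lemma s_0_6_10_14_15 : 0 < E 0 6 10 14 15.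
Proof.
have h0 := s_0_1_5_6_14.
have h1 := s_0_1_6_10_14.
have h2 := s_0_1_6_14_15.
have h3 := s_0_5_6_10_14.
have h4 := s_0_5_6_14_15.
have := @hGP 0 6 14 1 5 10 15.
rewrite ?(@hsw3 0 6 14 1 5) ?(@hsw4 0 6 1 14 5) ?(@hsw2 0 6 1 5 14) ?(@hsw3 0 1 6 5 14) ?(@hsw3 0 6 14 10 15) ?(@hsw3 0 6 14 1 10) ?(@hsw4 0 6 1 14 10) ?(@hsw2 0 6 1 10 14) ?(@hsw3 0 6 14 5 15) ?(@hsw2 0 6 5 14 15) ?(@hsw3 0 6 14 1 15) ?(@hsw2 0 6 1 14 15) ?(@hsw3 0 6 14 5 10) ?(@hsw4 0 6 5 14 10) ?(@hsw2 0 6 5 10 14).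
move=> hp; nra.
Qed.

Lemma s_0_1_10_14_15 : 0 < E 0 1 10 14 15.
Proof.
have h0 := s_0_1_4_10_14.
have h1 := s_0_1_6_10_14.
have h2 := s_0_4_6_10_14.
have h3 := s_0_4_10_14_15.
have h4 := s_0_6_10_14_15.
have := @hGP 0 10 14 1 4 6 15.
rewrite ?(@hsw3 0 10 14 1 4) ?(@hsw4 0 10 1 14 4) ?(@hsw2 0 10 1 4 14) ?(@hsw3 0 1 10 4 14) ?(@hsw3 0 10 14 6 15) ?(@hsw2 0 10 6 14 15) ?(@hsw3 0 10 14 1 6) ?(@hsw4 0 10 1 14 6) ?(@hsw2 0 10 1 6 14) ?(@hsw3 0 1 10 6 14) ?(@hsw3 0 10 14 4 15) ?(@hsw2 0 10 4 14 15) ?(@hsw3 0 10 14 1 15) ?(@hsw2 0 10 1 14 15) ?(@hsw3 0 10 14 4 6) ?(@hsw4 0 10 4 14 6) ?(@hsw2 0 10 4 6 14) ?(@hsw3 0 4 10 6 14).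
move=> hp; nra.
Qed.

Lemma s_0_2_3_6_8 : E 0 2 3 6 8 < 0.
Proof.
have h0 := s_0_2_6_8_12.
have h1 := s_0_2_6_8_13.
have h2 := s_0_3_6_8_12.
have h3 := s_0_3_6_8_13.
have h4 := s_0_6_8_12_13.
have := @hGP 0 6 8 2 3 12 13.
rewrite ?(@hsw3 0 6 8 2 3) ?(@hsw4 0 6 2 8 3) ?(@hsw2 0 6 2 3 8) ?(@hsw3 0 2 6 3 8) ?(@hsw3 0 6 8 2 12) ?(@hsw2 0 6 2 8 12) ?(@hsw3 0 6 8 3 13) ?(@hsw2 0 6 3 8 13) ?(@hsw3 0 6 8 2 13) ?(@hsw2 0 6 2 8 13) ?(@hsw3 0 6 8 3 12) ?(@hsw2 0 6 3 8 12).
move=> hp; nra.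
Qed.

Lemma s_0_2_3_7_9 : 0 < E 0 2 3 7 9.
Proof.
have h0 := s_0_2_7_9_12.
have h1 := s_0_2_7_9_14.
have h2 := s_0_3_7_9_12.
have h3 := s_0_3_7_9_14.
have h4 := s_0_7_9_12_14.
have := @hGP 0 7 9 2 3 12 14.
rewrite ?(@hsw3 0 7 9 2 3) ?(@hsw4 0 7 2 9 3) ?(@hsw2 0 7 2 3 9) ?(@hsw3 0 2 7 3 9) ?(@hsw3 0 7 9 2 12) ?(@hsw2 0 7 2 9 12) ?(@hsw3 0 7 9 3 14) ?(@hsw2 0 7 3 9 14) ?(@hsw3 0 7 9 2 14) ?(@hsw2 0 7 2 9 14) ?(@hsw3 0 7 9 3 12) ?(@hsw2 0 7 3 9 12).
move=> hp; nra.
Qed.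

Lemma s_0_2_6_8_15 : E 0 2 6 8 15 < 0.
Proof.
have h0 := s_0_2_3_6_8.
have h1 := s_0_2_6_8_12.
have h2 := s_0_3_6_8_12.
have h3 := s_0_3_6_8_15.
have h4 := s_0_6_8_12_15.
have := @hGP 0 6 8 2 3 12 15.
rewrite ?(@hsw3 0 6 8 2 3) ?(@hsw4 0 6 2 8 3) ?(@hsw2 0 6 2 3 8) ?(@hsw3 0 2 6 3 8) ?(@hsw3 0 6 8 2 12) ?(@hsw2 0 6 2 8 12) ?(@hsw3 0 6 8 3 15) ?(@hsw2 0 6 3 8 15) ?(@hsw3 0 6 8 2 15) ?(@hsw2 0 6 2 8 15) ?(@hsw3 0 6 8 3 12) ?(@hsw2 0 6 3 8 12).
move=> hp; nra.
Qed.

Lemma s_0_2_6_8_11 : E 0 2 6 8 11 < 0.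
Proof.
have h0 := s_0_2_6_8_12.
have h1 := s_0_2_6_8_15.
have h2 := s_2_6_8_11_12.
have h3 := s_2_6_8_11_15.
have h4 := s_2_6_8_12_15.
have := @hGP 2 6 8 0 11 12 15.
rewrite ?(@hsw3 2 6 8 0 11) ?(@hsw2 2 6 0 8 11) ?(@hsw1 2 0 6 8 11) ?(@hsw3 2 6 8 0 12) ?(@hsw2 2 6 0 8 12) ?(@hsw1 2 0 6 8 12) ?(@hsw3 2 6 8 0 15) ?(@hsw2 2 6 0 8 15) ?(@hsw1 2 0 6 8 15).
move=> hp; nra.
Qed.

Lemma s_0_2_6_13_14 : E 0 2 6 13 14 < 0.
Proof.
have h0 := s_0_2_6_8_14.
have h1 := s_0_2_6_9_14.
have h2 := s_2_6_8_9_14.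
have h3 := s_2_6_8_13_14.
have h4 := s_2_6_9_13_14.
have := @hGP 2 6 14 0 8 9 13.
rewrite ?(@hsw3 2 6 14 0 8) ?(@hsw4 2 6 0 14 8) ?(@hsw2 2 6 0 8 14) ?(@hsw1 2 0 6 8 14) ?(@hsw3 2 6 14 9 13) ?(@hsw4 2 6 9 14 13) ?(@hsw3 2 6 14 0 9) ?(@hsw4 2 6 0 14 9) ?(@hsw2 2 6 0 9 14) ?(@hsw1 2 0 6 9 14) ?(@hsw3 2 6 14 8 13) ?(@hsw4 2 6 8 14 13) ?(@hsw3 2 6 14 0 13) ?(@hsw4 2 6 0 14 13) ?(@hsw2 2 6 0 13 14) ?(@hsw1 2 0 6 13 14) ?(@hsw3 2 6 14 8 9) ?(@hsw4 2 6 8 14 9).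
move=> hp; nra.
Qed.

Lemma s_0_6_8_10_15 : 0 < E 0 6 8 10 15.
Proof.
have h0 := s_0_1_6_8_15.
have h1 := s_0_1_6_10_15.
have h2 := s_0_1_6_14_15.
have h3 := s_0_6_8_14_15.
have h4 := s_0_6_10_14_15.
have := @hGP 0 6 15 1 8 10 14.
rewrite ?(@hsw3 0 6 15 1 8) ?(@hsw4 0 6 1 15 8) ?(@hsw2 0 6 1 8 15) ?(@hsw3 0 6 15 10 14) ?(@hsw4 0 6 10 15 14) ?(@hsw3 0 6 15 1 10) ?(@hsw4 0 6 1 15 10) ?(@hsw2 0 6 1 10 15) ?(@hsw3 0 6 15 8 14) ?(@hsw4 0 6 8 15 14) ?(@hsw3 0 6 15 1 14) ?(@hsw4 0 6 1 15 14) ?(@hsw2 0 6 1 14 15) ?(@hsw3 0 6 15 8 10) ?(@hsw4 0 6 8 15 10).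
move=> hp; nra.
Qed.

Lemma s_0_2_6_14_15 : 0 < E 0 2 6 14 15.
Proof.
have h0 := s_0_2_6_8_15.
have h1 := s_0_2_6_10_15.
have h2 := s_0_6_8_10_15.
have h3 := s_0_6_8_14_15.
have h4 := s_0_6_10_14_15.
have := @hGP 0 6 15 2 8 10 14.
rewrite ?(@hsw3 0 6 15 2 8) ?(@hsw4 0 6 2 15 8) ?(@hsw2 0 6 2 8 15) ?(@hsw3 0 6 15 10 14) ?(@hsw4 0 6 10 15 14) ?(@hsw3 0 6 15 2 10) ?(@hsw4 0 6 2 15 10) ?(@hsw2 0 6 2 10 15) ?(@hsw3 0 6 15 8 14) ?(@hsw4 0 6 8 15 14) ?(@hsw3 0 6 15 2 14) ?(@hsw4 0 6 2 15 14) ?(@hsw2 0 6 2 14 15) ?(@hsw3 0 6 15 8 10) ?(@hsw4 0 6 8 15 10).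
move=> hp; nra.
Qed.

Lemma s_0_2_7_9_13 : 0 < E 0 2 7 9 13.
Proof.
have h0 := s_0_2_3_7_9.
have h1 := s_0_2_7_9_14.
have h2 := s_0_3_7_9_13.
have h3 := s_0_3_7_9_14.
have h4 := s_0_7_9_13_14.
have := @hGP 0 7 9 2 3 13 14.
rewrite ?(@hsw3 0 7 9 2 3) ?(@hsw4 0 7 2 9 3) ?(@hsw2 0 7 2 3 9) ?(@hsw3 0 2 7 3 9) ?(@hsw3 0 7 9 2 13) ?(@hsw2 0 7 2 9 13) ?(@hsw3 0 7 9 3 14) ?(@hsw2 0 7 3 9 14) ?(@hsw3 0 7 9 2 14) ?(@hsw2 0 7 2 9 14) ?(@hsw3 0 7 9 3 13) ?(@hsw2 0 7 3 9 13).
move=> hp; nra.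
Qed.

Lemma s_0_2_9_13_15 : 0 < E 0 2 9 13 15.
Proof.
have h0 := s_0_2_4_9_13.
have h1 := s_0_2_7_9_13.
have h2 := s_0_4_7_9_13.
have h3 := s_0_4_9_13_15.
have h4 := s_0_7_9_13_15.
have := @hGP 0 9 13 2 4 7 15.
rewrite ?(@hsw3 0 9 13 2 4) ?(@hsw4 0 9 2 13 4) ?(@hsw2 0 9 2 4 13) ?(@hsw3 0 2 9 4 13) ?(@hsw3 0 9 13 7 15) ?(@hsw2 0 9 7 13 15) ?(@hsw3 0 9 13 2 7) ?(@hsw4 0 9 2 13 7) ?(@hsw2 0 9 2 7 13) ?(@hsw3 0 2 9 7 13) ?(@hsw3 0 9 13 4 15) ?(@hsw2 0 9 4 13 15) ?(@hsw3 0 9 13 2 15) ?(@hsw2 0 9 2 13 15) ?(@hsw3 0 9 13 4 7) ?(@hsw4 0 9 4 13 7) ?(@hsw2 0 9 4 7 13) ?(@hsw3 0 4 9 7 13).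
move=> hp; nra.
Qed.

Lemma s_0_5_7_9_10 : E 0 5 7 9 10 < 0.
Proof.
have h0 := s_0_5_7_9_13.
have h1 := s_0_5_7_9_14.
have h2 := s_0_5_9_10_13.
have h3 := s_0_5_9_10_14.
have h4 := s_0_5_9_13_14.
have := @hGP 0 5 9 7 10 13 14.
rewrite ?(@hsw3 0 5 9 7 10) ?(@hsw3 0 5 9 7 13) ?(@hsw3 0 5 9 7 14).
move=> hp; nra.
Qed.

Lemma s_0_9_10_14_15 : 0 < E 0 9 10 14 15.
Proof.
have h0 := s_0_5_7_9_10.
have h1 := s_0_5_9_10_14.
have h2 := s_0_5_9_10_15.
have h3 := s_0_7_9_10_14.
have h4 := s_0_7_9_10_15.
have := @hGP 0 9 10 5 7 14 15.
rewrite ?(@hsw3 0 9 10 5 7) ?(@hsw4 0 9 5 10 7) ?(@hsw2 0 9 5 7 10) ?(@hsw3 0 5 9 7 10) ?(@hsw3 0 9 10 5 14) ?(@hsw2 0 9 5 10 14) ?(@hsw3 0 9 10 7 15) ?(@hsw2 0 9 7 10 15) ?(@hsw3 0 9 10 5 15) ?(@hsw2 0 9 5 10 15) ?(@hsw3 0 9 10 7 14) ?(@hsw2 0 9 7 10 14).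
move=> hp; nra.
Qed.

Lemma s_0_4_6_10_15 : E 0 4 6 10 15 < 0.
Proof.
have h0 := s_0_1_4_10_15.
have h1 := s_0_1_6_10_15.
have h2 := s_0_1_10_14_15.
have h3 := s_0_4_10_14_15.
have h4 := s_0_6_10_14_15.
have := @hGP 0 10 15 1 4 6 14.
rewrite ?(@hsw3 0 10 15 1 4) ?(@hsw4 0 10 1 15 4) ?(@hsw2 0 10 1 4 15) ?(@hsw3 0 1 10 4 15) ?(@hsw3 0 10 15 6 14) ?(@hsw4 0 10 6 15 14) ?(@hsw2 0 10 6 14 15) ?(@hsw3 0 10 15 1 6) ?(@hsw4 0 10 1 15 6) ?(@hsw2 0 10 1 6 15) ?(@hsw3 0 1 10 6 15) ?(@hsw3 0 10 15 4 14) ?(@hsw4 0 10 4 15 14) ?(@hsw2 0 10 4 14 15) ?(@hsw3 0 10 15 1 14) ?(@hsw4 0 10 1 15 14) ?(@hsw2 0 10 1 14 15) ?(@hsw3 0 10 15 4 6) ?(@hsw4 0 10 4 15 6) ?(@hsw2 0 10 4 6 15) ?(@hsw3 0 4 10 6 15).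
move=> hp; nra.
Qed.

Lemma s_0_2_10_14_15 : E 0 2 10 14 15 < 0.
Proof.
have h0 := s_0_2_4_10_15.
have h1 := s_0_2_6_10_15.
have h2 := s_0_4_6_10_15.
have h3 := s_0_4_10_14_15.
have h4 := s_0_6_10_14_15.
have := @hGP 0 10 15 2 4 6 14.
rewrite ?(@hsw3 0 10 15 2 4) ?(@hsw4 0 10 2 15 4) ?(@hsw2 0 10 2 4 15) ?(@hsw3 0 2 10 4 15) ?(@hsw3 0 10 15 6 14) ?(@hsw4 0 10 6 15 14) ?(@hsw2 0 10 6 14 15) ?(@hsw3 0 10 15 2 6) ?(@hsw4 0 10 2 15 6) ?(@hsw2 0 10 2 6 15) ?(@hsw3 0 2 10 6 15) ?(@hsw3 0 10 15 4 14) ?(@hsw4 0 10 4 15 14) ?(@hsw2 0 10 4 14 15) ?(@hsw3 0 10 15 2 14) ?(@hsw4 0 10 2 15 14) ?(@hsw2 0 10 2 14 15) ?(@hsw3 0 10 15 4 6) ?(@hsw4 0 10 4 15 6) ?(@hsw2 0 10 4 6 15) ?(@hsw3 0 4 10 6 15).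
move=> hp; nra.
Qed.

Lemma s_0_2_9_14_15 : 0 < E 0 2 9 14 15.
Proof.
have h0 := s_0_2_6_14_15.
have h1 := s_0_2_10_14_15.
have h2 := s_0_6_9_14_15.
have h3 := s_0_6_10_14_15.
have h4 := s_0_9_10_14_15.
have := @hGP 0 14 15 2 6 9 10.
rewrite ?(@hsw3 0 14 15 2 6) ?(@hsw4 0 14 2 15 6) ?(@hsw2 0 14 2 6 15) ?(@hsw3 0 2 14 6 15) ?(@hsw3 0 14 15 9 10) ?(@hsw4 0 14 9 15 10) ?(@hsw2 0 14 9 10 15) ?(@hsw3 0 9 14 10 15) ?(@hsw3 0 14 15 2 9) ?(@hsw4 0 14 2 15 9) ?(@hsw2 0 14 2 9 15) ?(@hsw3 0 2 14 9 15) ?(@hsw3 0 14 15 6 10) ?(@hsw4 0 14 6 15 10) ?(@hsw2 0 14 6 10 15) ?(@hsw3 0 6 14 10 15) ?(@hsw3 0 14 15 2 10) ?(@hsw4 0 14 2 15 10) ?(@hsw2 0 14 2 10 15) ?(@hsw3 0 2 14 10 15) ?(@hsw3 0 14 15 6 9) ?(@hsw4 0 14 6 15 9) ?(@hsw2 0 14 6 9 15) ?(@hsw3 0 6 14 9 15).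
move=> hp; nra.
Qed.

Lemma s_0_2_10_11_14 : E 0 2 10 11 14 < 0.
Proof.
have h0 := s_0_2_4_10_14.
have h1 := s_0_2_7_10_14.
have h2 := s_0_4_7_10_14.
have h3 := s_0_4_10_11_14.
have h4 := s_0_7_10_11_14.
have := @hGP 0 10 14 2 4 7 11.
rewrite ?(@hsw3 0 10 14 2 4) ?(@hsw4 0 10 2 14 4) ?(@hsw2 0 10 2 4 14) ?(@hsw3 0 2 10 4 14) ?(@hsw3 0 10 14 7 11) ?(@hsw4 0 10 7 14 11) ?(@hsw2 0 10 7 11 14) ?(@hsw3 0 10 14 2 7) ?(@hsw4 0 10 2 14 7) ?(@hsw2 0 10 2 7 14) ?(@hsw3 0 2 10 7 14) ?(@hsw3 0 10 14 4 11) ?(@hsw4 0 10 4 14 11) ?(@hsw2 0 10 4 11 14) ?(@hsw3 0 10 14 2 11) ?(@hsw4 0 10 2 14 11) ?(@hsw2 0 10 2 11 14) ?(@hsw3 0 10 14 4 7) ?(@hsw4 0 10 4 14 7) ?(@hsw2 0 10 4 7 14) ?(@hsw3 0 4 10 7 14).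
move=> hp; nra.
Qed.

Lemma s_2_3_5_6_10 : E 2 3 5 6 10 < 0.
Proof.
have h0 := s_2_3_5_10_12.
have h1 := s_2_3_5_10_14.
have h2 := s_2_5_6_10_12.
have h3 := s_2_5_6_10_14.
have h4 := s_2_5_10_12_14.
have := @hGP 2 5 10 3 6 12 14.
rewrite ?(@hsw3 2 5 10 3 6) ?(@hsw4 2 5 3 10 6) ?(@hsw2 2 5 3 6 10) ?(@hsw3 2 5 10 3 12) ?(@hsw2 2 5 3 10 12) ?(@hsw3 2 5 10 6 14) ?(@hsw3 2 5 10 3 14) ?(@hsw2 2 5 3 10 14) ?(@hsw3 2 5 10 6 12).
move=> hp; nra.
Qed.

Lemma s_2_3_6_8_10 : E 2 3 6 8 10 < 0.
Proof.
have h0 := s_2_3_6_8_12.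
have h1 := s_2_3_6_8_15.
have h2 := s_2_6_8_10_12.
have h3 := s_2_6_8_10_15.
have h4 := s_2_6_8_12_15.
have := @hGP 2 6 8 3 10 12 15.
rewrite ?(@hsw3 2 6 8 3 10) ?(@hsw2 2 6 3 8 10) ?(@hsw3 2 6 8 3 12) ?(@hsw2 2 6 3 8 12) ?(@hsw3 2 6 8 3 15) ?(@hsw2 2 6 3 8 15).
move=> hp; nra.
Qed.

Lemma s_2_5_6_8_10 : E 2 5 6 8 10 < 0.
Proof.
have h0 := s_2_3_5_6_10.
have h1 := s_2_3_6_8_10.
have h2 := s_2_3_6_10_14.
have h3 := s_2_5_6_10_14.
have h4 := s_2_6_8_10_14.
have := @hGP 2 6 10 3 5 8 14.
rewrite ?(@hsw3 2 6 10 3 5) ?(@hsw4 2 6 3 10 5) ?(@hsw2 2 6 3 5 10) ?(@hsw3 2 3 6 5 10) ?(@hsw3 2 6 10 8 14) ?(@hsw3 2 6 10 3 8) ?(@hsw4 2 6 3 10 8) ?(@hsw2 2 6 3 8 10) ?(@hsw3 2 6 10 5 14) ?(@hsw2 2 6 5 10 14) ?(@hsw3 2 6 10 3 14) ?(@hsw2 2 6 3 10 14) ?(@hsw3 2 6 10 5 8) ?(@hsw4 2 6 5 10 8) ?(@hsw2 2 6 5 8 10).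
move=> hp; nra.
Qed.

Lemma s_2_6_8_10_11 : 0 < E 2 6 8 10 11.
Proof.
have h0 := s_2_6_8_10_12.
have h1 := s_2_6_8_10_15.
have h2 := s_2_6_8_11_12.
have h3 := s_2_6_8_11_15.
have h4 := s_2_6_8_12_15.
have := @hGP 2 6 8 10 11 12 15.
move=> hp; nra.
Qed.

Lemma s_2_5_6_10_11 : E 2 5 6 10 11 < 0.
Proof.
have h0 := s_2_5_6_8_10.
have h1 := s_2_5_6_10_13.
have h2 := s_2_6_8_10_11.
have h3 := s_2_6_8_10_13.
have h4 := s_2_6_10_11_13.
have := @hGP 2 6 10 5 8 11 13.
rewrite ?(@hsw3 2 6 10 5 8) ?(@hsw4 2 6 5 10 8) ?(@hsw2 2 6 5 8 10) ?(@hsw3 2 6 10 5 11) ?(@hsw2 2 6 5 10 11) ?(@hsw3 2 6 10 8 13) ?(@hsw3 2 6 10 5 13) ?(@hsw2 2 6 5 10 13) ?(@hsw3 2 6 10 8 11).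
move=> hp; nra.
Qed.

Lemma s_2_6_8_9_10 : 0 < E 2 6 8 9 10.
Proof.
have h0 := s_2_6_8_9_12.
have h1 := s_2_6_8_9_14.
have h2 := s_2_6_8_10_12.
have h3 := s_2_6_8_10_14.
have h4 := s_2_6_8_12_14.
have := @hGP 2 6 8 9 10 12 14.
move=> hp; nra.
Qed.

Lemma s_1_2_6_8_9 : 0 < E 1 2 6 8 9.
Proof.
have h0 := s_1_2_6_8_12.
have h1 := s_1_2_6_8_14.
have h2 := s_2_6_8_9_12.
have h3 := s_2_6_8_9_14.
have h4 := s_2_6_8_12_14.
have := @hGP 2 6 8 1 9 12 14.
rewrite ?(@hsw3 2 6 8 1 9) ?(@hsw2 2 6 1 8 9) ?(@hsw1 2 1 6 8 9) ?(@hsw3 2 6 8 1 12) ?(@hsw2 2 6 1 8 12) ?(@hsw1 2 1 6 8 12) ?(@hsw3 2 6 8 1 14) ?(@hsw2 2 6 1 8 14) ?(@hsw1 2 1 6 8 14).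
move=> hp; nra.
Qed.

Lemma s_2_6_8_9_15 : 0 < E 2 6 8 9 15.
Proof.
have h0 := s_1_2_6_8_9.
have h1 := s_1_2_6_8_12.
have h2 := s_1_2_6_8_15.
have h3 := s_2_6_8_9_12.
have h4 := s_2_6_8_12_15.
have := @hGP 2 6 8 1 9 12 15.
rewrite ?(@hsw3 2 6 8 1 9) ?(@hsw2 2 6 1 8 9) ?(@hsw1 2 1 6 8 9) ?(@hsw3 2 6 8 1 12) ?(@hsw2 2 6 1 8 12) ?(@hsw1 2 1 6 8 12) ?(@hsw3 2 6 8 1 15) ?(@hsw2 2 6 1 8 15) ?(@hsw1 2 1 6 8 15).
move=> hp; nra.
Qed.

Lemma s_1_2_5_6_15 : 0 < E 1 2 5 6 15.
Proof.
have h0 := s_1_2_6_8_15.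
have h1 := s_1_2_6_11_15.
have h2 := s_1_5_6_8_15.
have h3 := s_1_5_6_11_15.
have h4 := s_1_6_8_11_15.
have := @hGP 1 6 15 2 5 8 11.
rewrite ?(@hsw3 1 6 15 2 5) ?(@hsw4 1 6 2 15 5) ?(@hsw2 1 6 2 5 15) ?(@hsw3 1 2 6 5 15) ?(@hsw3 1 6 15 8 11) ?(@hsw4 1 6 8 15 11) ?(@hsw3 1 6 15 2 8) ?(@hsw4 1 6 2 15 8) ?(@hsw2 1 6 2 8 15) ?(@hsw3 1 6 15 5 11) ?(@hsw4 1 6 5 15 11) ?(@hsw2 1 6 5 11 15) ?(@hsw3 1 6 15 2 11) ?(@hsw4 1 6 2 15 11) ?(@hsw2 1 6 2 11 15) ?(@hsw3 1 6 15 5 8) ?(@hsw4 1 6 5 15 8) ?(@hsw2 1 6 5 8 15).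
move=> hp; nra.
Qed.

Lemma s_1_2_6_9_15 : E 1 2 6 9 15 < 0.
Proof.
have h0 := s_1_2_5_6_15.
have h1 := s_1_2_6_10_15.
have h2 := s_1_5_6_9_15.
have h3 := s_1_5_6_10_15.
have h4 := s_1_6_9_10_15.
have := @hGP 1 6 15 2 5 9 10.
rewrite ?(@hsw3 1 6 15 2 5) ?(@hsw4 1 6 2 15 5) ?(@hsw2 1 6 2 5 15) ?(@hsw3 1 2 6 5 15) ?(@hsw3 1 6 15 9 10) ?(@hsw4 1 6 9 15 10) ?(@hsw3 1 6 15 2 9) ?(@hsw4 1 6 2 15 9) ?(@hsw2 1 6 2 9 15) ?(@hsw3 1 6 15 5 10) ?(@hsw4 1 6 5 15 10) ?(@hsw2 1 6 5 10 15) ?(@hsw3 1 6 15 2 10) ?(@hsw4 1 6 2 15 10) ?(@hsw2 1 6 2 10 15) ?(@hsw3 1 6 15 5 9) ?(@hsw4 1 6 5 15 9) ?(@hsw2 1 6 5 9 15).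
move=> hp; nra.
Qed.

Lemma s_2_6_8_14_15 : 0 < E 2 6 8 14 15.
Proof.
have h0 := s_0_1_2_6_8.
have h1 := s_0_2_6_8_14.
have h2 := s_0_2_6_8_15.
have h3 := s_1_2_6_8_14.
have h4 := s_1_2_6_8_15.
have := @hGP 2 6 8 0 1 14 15.
rewrite ?(@hsw3 2 6 8 0 1) ?(@hsw4 2 6 0 8 1) ?(@hsw2 2 6 0 1 8) ?(@hsw3 2 0 6 1 8) ?(@hsw1 2 0 1 6 8) ?(@hsw2 0 2 1 6 8) ?(@hsw3 2 6 8 0 14) ?(@hsw2 2 6 0 8 14) ?(@hsw1 2 0 6 8 14) ?(@hsw3 2 6 8 1 15) ?(@hsw2 2 6 1 8 15) ?(@hsw1 2 1 6 8 15) ?(@hsw3 2 6 8 0 15) ?(@hsw2 2 6 0 8 15) ?(@hsw1 2 0 6 8 15) ?(@hsw3 2 6 8 1 14) ?(@hsw2 2 6 1 8 14) ?(@hsw1 2 1 6 8 14).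
move=> hp; nra.
Qed.

Lemma s_2_6_8_11_14 : E 2 6 8 11 14 < 0.
Proof.
have h0 := s_0_2_6_8_11.
have h1 := s_0_2_6_8_14.
have h2 := s_0_2_6_8_15.
have h3 := s_2_6_8_11_15.
have h4 := s_2_6_8_14_15.
have := @hGP 2 6 8 0 11 14 15.
rewrite ?(@hsw3 2 6 8 0 11) ?(@hsw2 2 6 0 8 11) ?(@hsw1 2 0 6 8 11) ?(@hsw3 2 6 8 0 14) ?(@hsw2 2 6 0 8 14) ?(@hsw1 2 0 6 8 14) ?(@hsw3 2 6 8 0 15) ?(@hsw2 2 6 0 8 15) ?(@hsw1 2 0 6 8 15).
move=> hp; nra.
Qed.

Lemma s_2_6_8_9_11 : 0 < E 2 6 8 9 11.
Proof.
have h0 := s_2_6_8_9_12.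
have h1 := s_2_6_8_9_14.
have h2 := s_2_6_8_11_12.
have h3 := s_2_6_8_11_14.
have h4 := s_2_6_8_12_14.
have := @hGP 2 6 8 9 11 12 14.
move=> hp; nra.
Qed.

Lemma s_1_2_6_9_11 : E 1 2 6 9 11 < 0.
Proof.
have h0 := s_1_2_6_8_9.
have h1 := s_1_2_6_9_15.
have h2 := s_2_6_8_9_11.
have h3 := s_2_6_8_9_15.
have h4 := s_2_6_9_11_15.
have := @hGP 2 6 9 1 8 11 15.
rewrite ?(@hsw3 2 6 9 1 8) ?(@hsw4 2 6 1 9 8) ?(@hsw2 2 6 1 8 9) ?(@hsw1 2 1 6 8 9) ?(@hsw3 2 6 9 1 11) ?(@hsw2 2 6 1 9 11) ?(@hsw1 2 1 6 9 11) ?(@hsw3 2 6 9 8 15) ?(@hsw3 2 6 9 1 15) ?(@hsw2 2 6 1 9 15) ?(@hsw1 2 1 6 9 15) ?(@hsw3 2 6 9 8 11).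
move=> hp; nra.
Qed.

Lemma s_1_2_6_9_13 : E 1 2 6 9 13 < 0.
Proof.
have h0 := s_1_2_6_9_11.
have h1 := s_1_2_6_9_12.
have h2 := s_2_6_9_11_12.
have h3 := s_2_6_9_11_13.
have h4 := s_2_6_9_12_13.
have := @hGP 2 6 9 1 11 12 13.
rewrite ?(@hsw3 2 6 9 1 11) ?(@hsw2 2 6 1 9 11) ?(@hsw1 2 1 6 9 11) ?(@hsw3 2 6 9 1 12) ?(@hsw2 2 6 1 9 12) ?(@hsw1 2 1 6 9 12) ?(@hsw3 2 6 9 1 13) ?(@hsw2 2 6 1 9 13) ?(@hsw1 2 1 6 9 13).
move=> hp; nra.
Qed.

Lemma s_2_6_9_13_15 : E 2 6 9 13 15 < 0.
Proof.
have h0 := s_1_2_6_9_11.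
have h1 := s_1_2_6_9_13.
have h2 := s_1_2_6_9_15.
have h3 := s_2_6_9_11_13.
have h4 := s_2_6_9_11_15.
have := @hGP 2 6 9 1 11 13 15.
rewrite ?(@hsw3 2 6 9 1 11) ?(@hsw2 2 6 1 9 11) ?(@hsw1 2 1 6 9 11) ?(@hsw3 2 6 9 1 13) ?(@hsw2 2 6 1 9 13) ?(@hsw1 2 1 6 9 13) ?(@hsw3 2 6 9 1 15) ?(@hsw2 2 6 1 9 15) ?(@hsw1 2 1 6 9 15).
move=> hp; nra.
Qed.

Lemma s_2_6_9_10_13 : 0 < E 2 6 9 10 13.
Proof.
have h0 := s_2_6_8_9_10.
have h1 := s_2_6_8_9_13.
have h2 := s_2_6_8_9_15.
have h3 := s_2_6_9_10_15.
have h4 := s_2_6_9_13_15.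
have := @hGP 2 6 9 8 10 13 15.
rewrite ?(@hsw3 2 6 9 8 10) ?(@hsw3 2 6 9 8 13) ?(@hsw3 2 6 9 8 15).
move=> hp; nra.
Qed.

Lemma s_2_3_6_10_13 : E 2 3 6 10 13 < 0.
Proof.
have h0 := s_2_3_5_6_10.
have h1 := s_2_3_6_10_14.
have h2 := s_2_5_6_10_13.
have h3 := s_2_5_6_10_14.
have h4 := s_2_6_10_13_14.
have := @hGP 2 6 10 3 5 13 14.
rewrite ?(@hsw3 2 6 10 3 5) ?(@hsw4 2 6 3 10 5) ?(@hsw2 2 6 3 5 10) ?(@hsw3 2 3 6 5 10) ?(@hsw3 2 6 10 3 13) ?(@hsw2 2 6 3 10 13) ?(@hsw3 2 6 10 5 14) ?(@hsw2 2 6 5 10 14) ?(@hsw3 2 6 10 3 14) ?(@hsw2 2 6 3 10 14) ?(@hsw3 2 6 10 5 13) ?(@hsw2 2 6 5 10 13).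
move=> hp; nra.
Qed.

Lemma s_2_3_6_9_10 : E 2 3 6 9 10 < 0.
Proof.
have h0 := s_2_3_6_8_10.
have h1 := s_2_3_6_10_13.
have h2 := s_2_6_8_9_10.
have h3 := s_2_6_8_10_13.
have h4 := s_2_6_9_10_13.
have := @hGP 2 6 10 3 8 9 13.
rewrite ?(@hsw3 2 6 10 3 8) ?(@hsw4 2 6 3 10 8) ?(@hsw2 2 6 3 8 10) ?(@hsw3 2 6 10 9 13) ?(@hsw3 2 6 10 3 9) ?(@hsw4 2 6 3 10 9) ?(@hsw2 2 6 3 9 10) ?(@hsw3 2 6 10 8 13) ?(@hsw3 2 6 10 3 13) ?(@hsw2 2 6 3 10 13) ?(@hsw3 2 6 10 8 9) ?(@hsw4 2 6 8 10 9).
move=> hp; nra.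
Qed.

Lemma s_2_3_6_10_11 : E 2 3 6 10 11 < 0.
Proof.
have h0 := s_2_3_6_8_10.
have h1 := s_2_3_6_10_13.
have h2 := s_2_6_8_10_11.
have h3 := s_2_6_8_10_13.
have h4 := s_2_6_10_11_13.
have := @hGP 2 6 10 3 8 11 13.
rewrite ?(@hsw3 2 6 10 3 8) ?(@hsw4 2 6 3 10 8) ?(@hsw2 2 6 3 8 10) ?(@hsw3 2 6 10 3 11) ?(@hsw2 2 6 3 10 11) ?(@hsw3 2 6 10 8 13) ?(@hsw3 2 6 10 3 13) ?(@hsw2 2 6 3 10 13) ?(@hsw3 2 6 10 8 11).
move=> hp; nra.
Qed.

Lemma s_2_3_6_10_12 : 0 < E 2 3 6 10 12.
Proof.
have h0 := s_2_3_6_8_10.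
have h1 := s_2_3_6_10_14.
have h2 := s_2_6_8_10_12.
have h3 := s_2_6_8_10_14.
have h4 := s_2_6_10_12_14.
have := @hGP 2 6 10 3 8 12 14.
rewrite ?(@hsw3 2 6 10 3 8) ?(@hsw4 2 6 3 10 8) ?(@hsw2 2 6 3 8 10) ?(@hsw3 2 6 10 3 12) ?(@hsw2 2 6 3 10 12) ?(@hsw3 2 6 10 8 14) ?(@hsw3 2 6 10 3 14) ?(@hsw2 2 6 3 10 14) ?(@hsw3 2 6 10 8 12).
move=> hp; nra.
Qed.

Lemma s_2_6_9_10_11 : 0 < E 2 6 9 10 11.
Proof.
have h0 := s_2_6_8_9_10.
have h1 := s_2_6_8_9_11.
have h2 := s_2_6_8_9_15.
have h3 := s_2_6_9_10_15.
have h4 := s_2_6_9_11_15.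
have := @hGP 2 6 9 8 10 11 15.
rewrite ?(@hsw3 2 6 9 8 10) ?(@hsw3 2 6 9 8 11) ?(@hsw3 2 6 9 8 15).
move=> hp; nra.
Qed.

Lemma s_2_6_10_11_12 : 0 < E 2 6 10 11 12.
Proof.
have h0 := s_2_3_6_9_10.
have h1 := s_2_3_6_10_11.
have h2 := s_2_3_6_10_12.
have h3 := s_2_6_9_10_11.
have h4 := s_2_6_9_10_12.
have := @hGP 2 6 10 3 9 11 12.
rewrite ?(@hsw3 2 6 10 3 9) ?(@hsw4 2 6 3 10 9) ?(@hsw2 2 6 3 9 10) ?(@hsw3 2 6 10 3 11) ?(@hsw2 2 6 3 10 11) ?(@hsw3 2 6 10 9 12) ?(@hsw3 2 6 10 3 12) ?(@hsw2 2 6 3 10 12) ?(@hsw3 2 6 10 9 11).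
move=> hp; nra.
Qed.

Lemma s_2_4_6_7_10 : E 2 4 6 7 10 < 0.
Proof.
have h0 := s_2_4_6_10_13.
have h1 := s_2_4_6_10_14.
have h2 := s_2_4_7_10_13.
have h3 := s_2_4_7_10_14.
have h4 := s_2_4_10_13_14.
have := @hGP 2 4 10 6 7 13 14.
rewrite ?(@hsw3 2 4 10 6 7) ?(@hsw4 2 4 6 10 7) ?(@hsw3 2 4 10 6 13) ?(@hsw3 2 4 10 7 14) ?(@hsw3 2 4 10 6 14) ?(@hsw3 2 4 10 7 13).
move=> hp; nra.
Qed.

Lemma s_2_4_5_6_10 : 0 < E 2 4 5 6 10.
Proof.
have h0 := s_2_4_5_10_12.
have h1 := s_2_4_5_10_15.
have h2 := s_2_5_6_10_12.
have h3 := s_2_5_6_10_15.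
have h4 := s_2_5_10_12_15.
have := @hGP 2 5 10 4 6 12 15.
rewrite ?(@hsw3 2 5 10 4 6) ?(@hsw4 2 5 4 10 6) ?(@hsw2 2 5 4 6 10) ?(@hsw3 2 5 10 4 12) ?(@hsw2 2 5 4 10 12) ?(@hsw3 2 5 10 6 15) ?(@hsw3 2 5 10 4 15) ?(@hsw2 2 5 4 10 15) ?(@hsw3 2 5 10 6 12).
move=> hp; nra.
Qed.

Lemma s_2_3_4_6_10 : E 2 3 4 6 10 < 0.
Proof.
have h0 := s_2_3_5_6_10.
have h1 := s_2_3_6_10_14.
have h2 := s_2_4_5_6_10.
have h3 := s_2_4_6_10_14.
have h4 := s_2_5_6_10_14.
have := @hGP 2 6 10 3 4 5 14.
rewrite ?(@hsw3 2 6 10 3 4) ?(@hsw4 2 6 3 10 4) ?(@hsw2 2 6 3 4 10) ?(@hsw3 2 3 6 4 10) ?(@hsw3 2 6 10 5 14) ?(@hsw2 2 6 5 10 14) ?(@hsw3 2 6 10 3 5) ?(@hsw4 2 6 3 10 5) ?(@hsw2 2 6 3 5 10) ?(@hsw3 2 3 6 5 10) ?(@hsw3 2 6 10 4 14) ?(@hsw2 2 6 4 10 14) ?(@hsw3 2 6 10 3 14) ?(@hsw2 2 6 3 10 14) ?(@hsw3 2 6 10 4 5) ?(@hsw4 2 6 4 10 5) ?(@hsw2 2 6 4 5 10) ?(@hsw3 2 4 6 5 10).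
move=> hp; nra.
Qed.

Lemma s_2_4_6_8_10 : E 2 4 6 8 10 < 0.
Proof.
have h0 := s_2_3_4_6_10.
have h1 := s_2_3_6_8_10.
have h2 := s_2_3_6_10_14.
have h3 := s_2_4_6_10_14.
have h4 := s_2_6_8_10_14.
have := @hGP 2 6 10 3 4 8 14.
rewrite ?(@hsw3 2 6 10 3 4) ?(@hsw4 2 6 3 10 4) ?(@hsw2 2 6 3 4 10) ?(@hsw3 2 3 6 4 10) ?(@hsw3 2 6 10 8 14) ?(@hsw3 2 6 10 3 8) ?(@hsw4 2 6 3 10 8) ?(@hsw2 2 6 3 8 10) ?(@hsw3 2 6 10 4 14) ?(@hsw2 2 6 4 10 14) ?(@hsw3 2 6 10 3 14) ?(@hsw2 2 6 3 10 14) ?(@hsw3 2 6 10 4 8) ?(@hsw4 2 6 4 10 8) ?(@hsw2 2 6 4 8 10).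
move=> hp; nra.
Qed.

Lemma s_2_5_6_7_10 : E 2 5 6 7 10 < 0.
Proof.
have h0 := s_2_5_6_10_12.
have h1 := s_2_5_6_10_14.
have h2 := s_2_5_7_10_12.
have h3 := s_2_5_7_10_14.
have h4 := s_2_5_10_12_14.
have := @hGP 2 5 10 6 7 12 14.
rewrite ?(@hsw3 2 5 10 6 7) ?(@hsw4 2 5 6 10 7) ?(@hsw3 2 5 10 6 12) ?(@hsw3 2 5 10 7 14) ?(@hsw3 2 5 10 6 14) ?(@hsw3 2 5 10 7 12).
move=> hp; nra.
Qed.

Lemma s_2_4_6_10_12 : 0 < E 2 4 6 10 12.
Proof.
have h0 := s_2_4_5_6_10.
have h1 := s_2_4_6_7_10.
have h2 := s_2_5_6_7_10.
have h3 := s_2_5_6_10_12.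
have h4 := s_2_6_7_10_12.
have := @hGP 2 6 10 4 5 7 12.
rewrite ?(@hsw3 2 6 10 4 5) ?(@hsw4 2 6 4 10 5) ?(@hsw2 2 6 4 5 10) ?(@hsw3 2 4 6 5 10) ?(@hsw3 2 6 10 7 12) ?(@hsw3 2 6 10 4 7) ?(@hsw4 2 6 4 10 7) ?(@hsw2 2 6 4 7 10) ?(@hsw3 2 6 10 5 12) ?(@hsw2 2 6 5 10 12) ?(@hsw3 2 6 10 4 12) ?(@hsw2 2 6 4 10 12) ?(@hsw3 2 6 10 5 7) ?(@hsw4 2 6 5 10 7) ?(@hsw2 2 6 5 7 10).
move=> hp; nra.
Qed.

Lemma s_2_6_7_8_10 : E 2 6 7 8 10 < 0.
Proof.
have h0 := s_2_4_6_7_10.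
have h1 := s_2_4_6_8_10.
have h2 := s_2_4_6_10_12.
have h3 := s_2_6_7_10_12.
have h4 := s_2_6_8_10_12.
have := @hGP 2 6 10 4 7 8 12.
rewrite ?(@hsw3 2 6 10 4 7) ?(@hsw4 2 6 4 10 7) ?(@hsw2 2 6 4 7 10) ?(@hsw3 2 6 10 8 12) ?(@hsw3 2 6 10 4 8) ?(@hsw4 2 6 4 10 8) ?(@hsw2 2 6 4 8 10) ?(@hsw3 2 6 10 7 12) ?(@hsw3 2 6 10 4 12) ?(@hsw2 2 6 4 10 12) ?(@hsw3 2 6 10 7 8) ?(@hsw4 2 6 7 10 8).
move=> hp; nra.
Qed.

Lemma s_2_6_7_10_11 : 0 < E 2 6 7 10 11.
Proof.
have h0 := s_2_6_7_8_10.
have h1 := s_2_6_7_10_14.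
have h2 := s_2_6_8_10_11.
have h3 := s_2_6_8_10_14.
have h4 := s_2_6_10_11_14.
have := @hGP 2 6 10 7 8 11 14.
rewrite ?(@hsw3 2 6 10 7 8) ?(@hsw4 2 6 7 10 8) ?(@hsw3 2 6 10 7 11) ?(@hsw3 2 6 10 8 14) ?(@hsw3 2 6 10 7 14) ?(@hsw3 2 6 10 8 11).
move=> hp; nra.
Qed.

Lemma s_2_5_7_10_11 : E 2 5 7 10 11 < 0.
Proof.
have h0 := s_2_5_6_10_11.
have h1 := s_2_5_10_11_12.
have h2 := s_2_6_7_10_11.
have h3 := s_2_6_10_11_12.
have h4 := s_2_7_10_11_12.
have := @hGP 2 10 11 5 6 7 12.
rewrite ?(@hsw3 2 10 11 5 6) ?(@hsw4 2 10 5 11 6) ?(@hsw2 2 10 5 6 11) ?(@hsw3 2 5 10 6 11) ?(@hsw3 2 10 11 7 12) ?(@hsw2 2 10 7 11 12) ?(@hsw3 2 10 11 5 7) ?(@hsw4 2 10 5 11 7) ?(@hsw2 2 10 5 7 11) ?(@hsw3 2 5 10 7 11) ?(@hsw3 2 10 11 6 12) ?(@hsw2 2 10 6 11 12) ?(@hsw3 2 10 11 5 12) ?(@hsw2 2 10 5 11 12) ?(@hsw3 2 10 11 6 7) ?(@hsw4 2 10 6 11 7) ?(@hsw2 2 10 6 7 11) ?(@hsw3 2 6 10 7 11).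
move=> hp; nra.
Qed.

Lemma s_2_5_10_11_14 : E 2 5 10 11 14 < 0.
Proof.
have h0 := s_2_5_6_10_11.
have h1 := s_2_5_7_10_11.
have h2 := s_2_6_7_10_11.
have h3 := s_2_6_10_11_14.
have h4 := s_2_7_10_11_14.
have := @hGP 2 10 11 5 6 7 14.
rewrite ?(@hsw3 2 10 11 5 6) ?(@hsw4 2 10 5 11 6) ?(@hsw2 2 10 5 6 11) ?(@hsw3 2 5 10 6 11) ?(@hsw3 2 10 11 7 14) ?(@hsw2 2 10 7 11 14) ?(@hsw3 2 10 11 5 7) ?(@hsw4 2 10 5 11 7) ?(@hsw2 2 10 5 7 11) ?(@hsw3 2 5 10 7 11) ?(@hsw3 2 10 11 6 14) ?(@hsw2 2 10 6 11 14) ?(@hsw3 2 10 11 5 14) ?(@hsw2 2 10 5 11 14) ?(@hsw3 2 10 11 6 7) ?(@hsw4 2 10 6 11 7) ?(@hsw2 2 10 6 7 11) ?(@hsw3 2 6 10 7 11).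
move=> hp; nra.
Qed.

Lemma s_2_10_11_13_14 : E 2 10 11 13 14 < 0.
Proof.
have h0 := s_2_5_6_10_11.
have h1 := s_2_5_10_11_13.
have h2 := s_2_5_10_11_14.
have h3 := s_2_6_10_11_13.
have h4 := s_2_6_10_11_14.
have := @hGP 2 10 11 5 6 13 14.
rewrite ?(@hsw3 2 10 11 5 6) ?(@hsw4 2 10 5 11 6) ?(@hsw2 2 10 5 6 11) ?(@hsw3 2 5 10 6 11) ?(@hsw3 2 10 11 5 13) ?(@hsw2 2 10 5 11 13) ?(@hsw3 2 10 11 6 14) ?(@hsw2 2 10 6 11 14) ?(@hsw3 2 10 11 5 14) ?(@hsw2 2 10 5 11 14) ?(@hsw3 2 10 11 6 13) ?(@hsw2 2 10 6 11 13).
move=> hp; nra.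
Qed.

Lemma s_2_4_5_7_10 : 0 < E 2 4 5 7 10.
Proof.
have h0 := s_2_4_5_10_12.
have h1 := s_2_4_5_10_13.
have h2 := s_2_4_7_10_12.
have h3 := s_2_4_7_10_13.
have h4 := s_2_4_10_12_13.
have := @hGP 2 4 10 5 7 12 13.
rewrite ?(@hsw3 2 4 10 5 7) ?(@hsw4 2 4 5 10 7) ?(@hsw3 2 4 10 5 12) ?(@hsw3 2 4 10 7 13) ?(@hsw3 2 4 10 5 13) ?(@hsw3 2 4 10 7 12).
move=> hp; nra.
Qed.

Lemma s_2_4_5_10_14 : E 2 4 5 10 14 < 0.
Proof.
have h0 := s_2_4_5_7_10.
have h1 := s_2_4_5_10_13.
have h2 := s_2_4_7_10_13.
have h3 := s_2_4_7_10_14.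
have h4 := s_2_4_10_13_14.
have := @hGP 2 4 10 5 7 13 14.
rewrite ?(@hsw3 2 4 10 5 7) ?(@hsw4 2 4 5 10 7) ?(@hsw3 2 4 10 5 13) ?(@hsw3 2 4 10 7 14) ?(@hsw3 2 4 10 5 14) ?(@hsw3 2 4 10 7 13).
move=> hp; nra.
Qed.

Lemma s_2_4_10_11_14 : 0 < E 2 4 10 11 14.
Proof.
have h0 := s_0_2_4_10_14.
have h1 := s_0_2_5_10_14.
have h2 := s_0_2_10_11_14.
have h3 := s_2_4_5_10_14.
have h4 := s_2_5_10_11_14.
have := @hGP 2 10 14 0 4 5 11.
rewrite ?(@hsw3 2 10 14 0 4) ?(@hsw4 2 10 0 14 4) ?(@hsw2 2 10 0 4 14) ?(@hsw3 2 0 10 4 14) ?(@hsw1 2 0 4 10 14) ?(@hsw3 2 10 14 5 11) ?(@hsw4 2 10 5 14 11) ?(@hsw2 2 10 5 11 14) ?(@hsw3 2 10 14 0 5) ?(@hsw4 2 10 0 14 5) ?(@hsw2 2 10 0 5 14) ?(@hsw3 2 0 10 5 14) ?(@hsw1 2 0 5 10 14) ?(@hsw3 2 10 14 4 11) ?(@hsw4 2 10 4 14 11) ?(@hsw2 2 10 4 11 14) ?(@hsw3 2 10 14 0 11) ?(@hsw4 2 10 0 14 11) ?(@hsw2 2 10 0 11 14) ?(@hsw1 2 0 10 11 14) ?(@hsw3 2 10 14 4 5) ?(@hsw4 2 10 4 14 5) ?(@hsw2 2 10 4 5 14) ?(@hsw3 2 4 10 5 14).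
move=> hp; nra.
Qed.

Lemma s_0_2_10_13_14 : E 0 2 10 13 14 < 0.
Proof.
have h0 := s_0_2_4_10_14.
have h1 := s_0_2_10_11_14.
have h2 := s_2_4_10_11_14.
have h3 := s_2_4_10_13_14.
have h4 := s_2_10_11_13_14.
have := @hGP 2 10 14 0 4 11 13.
rewrite ?(@hsw3 2 10 14 0 4) ?(@hsw4 2 10 0 14 4) ?(@hsw2 2 10 0 4 14) ?(@hsw3 2 0 10 4 14) ?(@hsw1 2 0 4 10 14) ?(@hsw3 2 10 14 11 13) ?(@hsw4 2 10 11 14 13) ?(@hsw3 2 10 14 0 11) ?(@hsw4 2 10 0 14 11) ?(@hsw2 2 10 0 11 14) ?(@hsw1 2 0 10 11 14) ?(@hsw3 2 10 14 4 13) ?(@hsw4 2 10 4 14 13) ?(@hsw2 2 10 4 13 14) ?(@hsw3 2 10 14 0 13) ?(@hsw4 2 10 0 14 13) ?(@hsw2 2 10 0 13 14) ?(@hsw1 2 0 10 13 14) ?(@hsw3 2 10 14 4 11) ?(@hsw4 2 10 4 14 11) ?(@hsw2 2 10 4 11 14).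
move=> hp; nra.
Qed.

Lemma s_2_10_13_14_15 : E 2 10 13 14 15 < 0.
Proof.
have h0 := s_2_4_6_10_13.
have h1 := s_2_4_10_13_14.
have h2 := s_2_4_10_13_15.
have h3 := s_2_6_10_13_14.
have h4 := s_2_6_10_13_15.
have := @hGP 2 10 13 4 6 14 15.
rewrite ?(@hsw3 2 10 13 4 6) ?(@hsw4 2 10 4 13 6) ?(@hsw2 2 10 4 6 13) ?(@hsw3 2 4 10 6 13) ?(@hsw3 2 10 13 4 14) ?(@hsw2 2 10 4 13 14) ?(@hsw3 2 10 13 6 15) ?(@hsw2 2 10 6 13 15) ?(@hsw3 2 10 13 4 15) ?(@hsw2 2 10 4 13 15) ?(@hsw3 2 10 13 6 14) ?(@hsw2 2 10 6 13 14).
move=> hp; nra.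
Qed.

Lemma s_2_6_13_14_15 : 0 < E 2 6 13 14 15.
Proof.
have h0 := s_2_6_8_10_13.
have h1 := s_2_6_8_13_14.
have h2 := s_2_6_8_13_15.
have h3 := s_2_6_10_13_14.
have h4 := s_2_6_10_13_15.
have := @hGP 2 6 13 8 10 14 15.
rewrite ?(@hsw3 2 6 13 8 10) ?(@hsw4 2 6 8 13 10) ?(@hsw3 2 6 13 8 14) ?(@hsw3 2 6 13 10 15) ?(@hsw3 2 6 13 8 15) ?(@hsw3 2 6 13 10 14).
move=> hp; nra.
Qed.

Lemma s_0_2_13_14_15 : E 0 2 13 14 15 < 0.
Proof.
have h0 := s_0_2_6_13_14.
have h1 := s_0_2_10_13_14.
have h2 := s_2_6_10_13_14.
have h3 := s_2_6_13_14_15.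
have h4 := s_2_10_13_14_15.
have := @hGP 2 13 14 0 6 10 15.
rewrite ?(@hsw3 2 13 14 0 6) ?(@hsw4 2 13 0 14 6) ?(@hsw2 2 13 0 6 14) ?(@hsw3 2 0 13 6 14) ?(@hsw1 2 0 6 13 14) ?(@hsw3 2 13 14 10 15) ?(@hsw2 2 13 10 14 15) ?(@hsw3 2 13 14 0 10) ?(@hsw4 2 13 0 14 10) ?(@hsw2 2 13 0 10 14) ?(@hsw3 2 0 13 10 14) ?(@hsw1 2 0 10 13 14) ?(@hsw3 2 13 14 6 15) ?(@hsw2 2 13 6 14 15) ?(@hsw3 2 13 14 0 15) ?(@hsw2 2 13 0 14 15) ?(@hsw1 2 0 13 14 15) ?(@hsw3 2 13 14 6 10) ?(@hsw4 2 13 6 14 10) ?(@hsw2 2 13 6 10 14) ?(@hsw3 2 6 13 10 14).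
move=> hp; nra.
Qed.

Lemma s_2_7_9_13_15 : 0 < E 2 7 9 13 15.
Proof.
have h0 := s_0_1_2_7_9.
have h1 := s_0_2_7_9_13.
have h2 := s_0_2_7_9_15.
have h3 := s_1_2_7_9_13.
have h4 := s_1_2_7_9_15.
have := @hGP 2 7 9 0 1 13 15.
rewrite ?(@hsw3 2 7 9 0 1) ?(@hsw4 2 7 0 9 1) ?(@hsw2 2 7 0 1 9) ?(@hsw3 2 0 7 1 9) ?(@hsw1 2 0 1 7 9) ?(@hsw2 0 2 1 7 9) ?(@hsw3 2 7 9 0 13) ?(@hsw2 2 7 0 9 13) ?(@hsw1 2 0 7 9 13) ?(@hsw3 2 7 9 1 15) ?(@hsw2 2 7 1 9 15) ?(@hsw1 2 1 7 9 15) ?(@hsw3 2 7 9 0 15) ?(@hsw2 2 7 0 9 15) ?(@hsw1 2 0 7 9 15) ?(@hsw3 2 7 9 1 13) ?(@hsw2 2 7 1 9 13) ?(@hsw1 2 1 7 9 13).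
move=> hp; nra.
Qed.

Lemma s_2_9_13_14_15 : E 2 9 13 14 15 < 0.
Proof.
have h0 := s_0_2_7_9_15.
have h1 := s_0_2_9_13_15.
have h2 := s_0_2_9_14_15.
have h3 := s_2_7_9_13_15.
have h4 := s_2_7_9_14_15.
have := @hGP 2 9 15 0 7 13 14.
rewrite ?(@hsw3 2 9 15 0 7) ?(@hsw4 2 9 0 15 7) ?(@hsw2 2 9 0 7 15) ?(@hsw3 2 0 9 7 15) ?(@hsw1 2 0 7 9 15) ?(@hsw3 2 9 15 13 14) ?(@hsw4 2 9 13 15 14) ?(@hsw3 2 9 15 0 13) ?(@hsw4 2 9 0 15 13) ?(@hsw2 2 9 0 13 15) ?(@hsw1 2 0 9 13 15) ?(@hsw3 2 9 15 7 14) ?(@hsw4 2 9 7 15 14) ?(@hsw2 2 9 7 14 15) ?(@hsw3 2 9 15 0 14) ?(@hsw4 2 9 0 15 14) ?(@hsw2 2 9 0 14 15) ?(@hsw1 2 0 9 14 15) ?(@hsw3 2 9 15 7 13) ?(@hsw4 2 9 7 15 13) ?(@hsw2 2 9 7 13 15).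
move=> hp; nra.
Qed.

Lemma contra : False.
Proof.
have h0 := s_0_2_6_14_15.
have h1 := s_0_2_9_14_15.
have h2 := s_0_2_13_14_15.
have h3 := s_2_6_9_14_15.
have h4 := s_2_6_13_14_15.
have h5 := s_2_9_13_14_15.
have := @hGP 2 14 15 0 6 9 13.
rewrite ?(@hsw3 2 14 15 0 6) ?(@hsw4 2 14 0 15 6) ?(@hsw2 2 14 0 6 15) ?(@hsw3 2 0 14 6 15) ?(@hsw1 2 0 6 14 15) ?(@hsw3 2 14 15 9 13) ?(@hsw4 2 14 9 15 13) ?(@hsw2 2 14 9 13 15) ?(@hsw3 2 9 14 13 15) ?(@hsw3 2 14 15 0 9) ?(@hsw4 2 14 0 15 9) ?(@hsw2 2 14 0 9 15) ?(@hsw3 2 0 14 9 15) ?(@hsw1 2 0 9 14 15) ?(@hsw3 2 14 15 6 13) ?(@hsw4 2 14 6 15 13) ?(@hsw2 2 14 6 13 15) ?(@hsw3 2 6 14 13 15) ?(@hsw3 2 14 15 0 13) ?(@hsw4 2 14 0 15 13) ?(@hsw2 2 14 0 13 15) ?(@hsw3 2 0 14 13 15) ?(@hsw1 2 0 13 14 15) ?(@hsw3 2 14 15 6 9) ?(@hsw4 2 14 6 15 9) ?(@hsw2 2 14 6 9 15) ?(@hsw3 2 6 14 9 15).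
move=> hp; nra.
Qed.
End Comb.
Lemma Zf_lt16 : all (fun s => all (fun f => (f < 16)%N) s) Z_facets.
Proof. by []. Qed.

Theorem mainTheorem2 (R : realType) : ~ polytopal R 4 Z_facet.
Proof.
move=> [p [_ hfac]].
pose E0 := Bp p.
have hGP0 : forall a1 a2 a3 a b c d,
  E0 a1 a2 a3 a b * E0 a1 a2 a3 c d - E0 a1 a2 a3 a c * E0 a1 a2 a3 b d
  + E0 a1 a2 a3 a d * E0 a1 a2 a3 b c = 0.
  by move=> *; exact: GPv.
have s1 : forall a b c d e, E0 a b c d e = - E0 b a c d e by move=> *; exact: Bsw1.
have s2 : forall a b c d e, E0 a b c d e = - E0 a c b d e by move=> *; exact: Bsw2.
have s3 : forall a b c d e, E0 a b c d e = - E0 a b d c e by move=> *; exact: Bsw3.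
have s4 : forall a b c d e, E0 a b c d e = - E0 a b c e d by move=> *; exact: Bsw4.
have hF0 : forall f0 f1 f2 f3 v w, fcond f0 f1 f2 f3 v w ->
    0 < E0 f0 f1 f2 f3 v * E0 f0 f1 f2 f3 w.
  move=> f0 f1 f2 f3 v w /and5P [hs hv hw v16 w16].
  pose T := [set x : 'I_16 | val x \in [:: f0; f1; f2; f3]].
  have hT : is_facet p T by apply/hfac; exists [:: f0; f1; f2; f3].
  have l16 : all (fun f => (f < 16)%N) [:: f0; f1; f2; f3].
    by move: Zf_lt16 => /allP /(_ _ hs).
  apply: (facet_pos hT).
  - by move=> i; rewrite /T inE.
  - by rewrite /T inE /= inordK.
  - by rewrite /T inE /= inordK.
  - by move=> f hf; rewrite /T inE /= inordK // (allP l16).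
have nz : E0 2 6 7 10 14 != 0.
  have := hF0 2 6 10 14 7 7 isT.
  rewrite (s4 2 6 10 14 7) (s3 2 6 10 7 14) opprK => h.
  by apply/negP => /eqP e; move: h; rewrite e mul0r ltxx.
case: (ltrgtP (E0 2 6 7 10 14) 0) => [neg|pos|z]; last by rewrite z eqxx in nz.
  exact: (contra hGP0 s1 s2 s3 s4 hF0 neg).
pose E1 a b c d e := - E0 a b c d e.
apply: (@contra R E1).
- by move=> a1 a2 a3 a b c d; rewrite /E1 -(hGP0 a1 a2 a3 a b c d); ring.
- by move=> a b c d e; rewrite /E1 (s1 a b c d e) !opprK.
- by move=> a b c d e; rewrite /E1 (s2 a b c d e) !opprK.
- by move=> a b c d e; rewrite /E1 (s3 a b c d e) !opprK.
- by move=> a b c d e; rewrite /E1 (s4 a b c d e) !opprK.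
- by move=> f0 f1 f2 f3 v w h; rewrite /E1 mulrNN; exact: hF0.
- by rewrite /E1 oppr_lt0.
Qed.
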